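(* Let $V$ be real-valued and absolutely continuous on $[0,\pi]$ and let $a\in(0,\pi]$. There are constants $C_1>0$ (depending on $V$) and $C_2,C_3>0$ (depending on $V$ and $a$) such that for all $z\in\mathbb C$ and $n\in\mathbb N$: $$\left|\int_0^\pi F(x,z)\cos(nx)\,dx\right|\le C_1\frac{e^{\pi|\operatorname{Im}\sqrt z|}}{n^2}\left(1+\frac{1+|z|}{1+\pi|z|^{1/2}}\right),$$ $$\left|\int_0^a\rho(x)\cos(\sqrt z\,x)\sin(nx)\,dx\right|\le C_2\frac{e^{\pi|\operatorname{Im}\sqrt z|}}{n}\left(1+\frac{|z|}{1+\pi|z|^{1/2}}\right),$$ $$\left|\int_0^a\rho(x)F(x,z)\sin(nx)\,dx\right|\le C_3\frac{e^{\pi|\operatorname{Im}\sqrt z|}}{n}\left(1+\frac{1}{1+\pi|z|^{1/2}}\right).$$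
   Context: $\sqrt{\cdot}$ is the principal branch. $\xi(x,z)$ is the solution of $-\xi''+V\xi=z\xi$, $\xi(0,z)=1$, $\xi'(0,z)=0$. $F(x,z):=\xi(x,z)-\cos(\sqrt z\,x)$ and $\rho(x):=\frac12\int_0^xV(y)\,dy-\frac{x}{2\pi}\int_0^\pi V(y)\,dy$ for $x\in[0,\pi]$. *)

(* Defs.v *)
From Stdlib Require Import Reals Lra List ClassicalEpsilon.
Open Scope R_scope.

Definition Cx : Type := (R * R)%type.
Definition Re (z : Cx) : R := fst z.
Definition Im (z : Cx) : R := snd z.
Definition Cmod (z : Cx) : R := sqrt (Re z ^ 2 + Im z ^ 2).
Definition Cadd (z w : Cx) : Cx := (Re z + Re w, Im z + Im w).
Definition Csub (z w : Cx) : Cx := (Re z - Re w, Im z - Im w).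
Definition Cmul (z w : Cx) : Cx :=
  (Re z * Re w - Im z * Im w, Re z * Im w + Im z * Re w).
Definition RtoC (r : R) : Cx := (r, 0).
Definition Cscal (r : R) (z : Cx) : Cx := (r * Re z, r * Im z).

(* Principal branch of the square root: argument in (-pi, pi], so the
   result has Re >= 0 (and Im >= 0 on the negative real axis). *)
Definition Csqrt (z : Cx) : Cx :=
  (sqrt ((Cmod z + Re z) / 2),
   (if Rle_dec 0 (Im z) then 1 else -1) * sqrt ((Cmod z - Re z) / 2)).

(* cos(p + i q) = cos p cosh q - i sin p sinh q *)
Definition Ccos (w : Cx) : Cx :=
  (cos (Re w) * cosh (Im w), - (sin (Re w) * sinh (Im w))).

(* ---- Total Riemann integral (0 if not Riemann integrable) ---- *)
Definition Rint (f : R -> R) (a b : R) : R :=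
  match excluded_middle_informative (inhabited (Riemann_integrable f a b)) with
  | left H => RiemannInt (epsilon H (fun _ => True))
  | right _ => 0
  end.

Definition Cint (f : R -> Cx) (a b : R) : Cx :=
  (Rint (fun x => Re (f x)) a b, Rint (fun x => Im (f x)) a b).

(* chain lo hi l : l = [(a1,b1);...;(ak,bk)] with lo <= a1 <= b1 <= a2 <= ... <= bk <= hi,
   i.e. a finite family of non-overlapping subintervals of [lo,hi]. *)
Fixpoint chain (lo hi : R) (l : list (R * R)) : Prop :=
  match l with
  | nil => lo <= hi
  | (a, b) :: t => lo <= a /\ a <= b /\ chain b hi t
  end.

Fixpoint sumlen (l : list (R * R)) : R :=
  match l with nil => 0 | (a, b) :: t => (b - a) + sumlen t end.

Fixpoint sumvar (V : R -> R) (l : list (R * R)) : R :=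
  match l with nil => 0 | (a, b) :: t => Rabs (V b - V a) + sumvar V t end.

Definition abs_continuous_on (V : R -> R) (a b : R) : Prop :=
  forall eps, 0 < eps -> exists delta, 0 < delta /\
    forall l, chain a b l -> sumlen l < delta -> sumvar V l < eps.

(* xi solves -xi'' + V xi = z xi on [0,pi], xi(0)=1, xi'(0)=0;
   dxi is its x-derivative. *)
Definition is_xi (V : R -> R) (xi dxi : R -> Cx -> Cx) : Prop :=
  forall z : Cx,
    xi 0 z = RtoC 1 /\ dxi 0 z = RtoC 0 /\
    forall x, 0 <= x <= PI ->
      derivable_pt_lim (fun t => Re (xi t z)) x (Re (dxi x z)) /\
      derivable_pt_lim (fun t => Im (xi t z)) x (Im (dxi x z)) /\
      derivable_pt_lim (fun t => Re (dxi t z)) x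
        (Re (Cmul (Csub (RtoC (V x)) z) (xi x z))) /\
      derivable_pt_lim (fun t => Im (dxi t z)) x
        (Im (Cmul (Csub (RtoC (V x)) z) (xi x z))).

Definition Ffun (xi : R -> Cx -> Cx) (x : R) (z : Cx) : Cx :=
  Csub (xi x z) (Ccos (Cscal x (Csqrt z))).

Definition rho (V : R -> R) (x : R) : R :=
  / 2 * Rint V 0 x - x / (2 * PI) * Rint V 0 PI.

(* Main.v *)
From Pilot Require Import Defs.
From Stdlib Require Import Reals Lra Psatz ClassicalEpsilon.
From Coquelicot Require Import Rcomplements Rbar Hierarchy Continuity Derive RInt RInt_analysis AutoDerive.
From Coquelicot Require Complex.
Import Pilot.Defs.
Open Scope R_scope.



Lemma Cmod_mul a b : Cmod (Cmul a b) = Cmod a * Cmod b.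
Proof. exact (Complex.Cmod_mult a b). Qed.
Lemma Cmod_add a b : Cmod (Cadd a b) <= Cmod a + Cmod b.
Proof. exact (Complex.Cmod_triangle a b). Qed.
Lemma Cmod_ge0 a : 0 <= Cmod a.
Proof. exact (Complex.Cmod_ge_0 a). Qed.
Lemma Cmod_sub a b : Cmod (Csub a b) <= Cmod a + Cmod b.
Proof.
  replace (Csub a b) with (Cadd a (Cscal (-1) b)).
  2:{ unfold Cadd, Csub, Cscal, Re, Im; simpl; f_equal; ring. }
  eapply Rle_trans; [apply Cmod_add|].
  replace (Cmod (Cscal (-1) b)) with (Cmod b). lra.
  unfold Cmod, Cscal, Re, Im; simpl. f_equal; ring.
Qed.
Lemma Cmod_scal r a : Cmod (Cscal r a) = Rabs r * Cmod a.
Proof.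
  replace (Cscal r a) with (Cmul (RtoC r) a).
  2:{ unfold Cmul, Cscal, RtoC, Re, Im; simpl; f_equal; ring. }
  rewrite Cmod_mul. f_equal. exact (Complex.Cmod_R r).
Qed.
Lemma Cmod_sq a : Cmod a ^ 2 = Re a ^ 2 + Im a ^ 2.
Proof. exact (Complex.Cmod2_alt a). Qed.
Lemma Cmod_le a b : Re a ^ 2 + Im a ^ 2 <= b ^ 2 -> 0 <= b -> Cmod a <= b.
Proof.
  intros H Hb. unfold Cmod. rewrite <- (sqrt_pow2 b Hb). apply sqrt_le_1_alt. exact H.
Qed.
Lemma Cmod_zero : Cmod (0,0) = 0.
Proof. exact Complex.Cmod_0. Qed.

Definition cl (b x : R) : R := Rmax 0 (Rmin b x).
Lemma cl_lip b x y : 0 <= b -> Rabs (cl b x - cl b y) <= Rabs (x - y).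
Proof. intros. unfold cl, Rmax, Rmin. repeat destruct Rle_dec; split_Rabs; lra. Qed.
Lemma cl_in b x : 0 <= b -> 0 <= cl b x <= b.
Proof. intros. unfold cl, Rmax, Rmin. repeat destruct Rle_dec; lra. Qed.
Lemma cl_id b x : 0 <= x <= b -> cl b x = x.
Proof. intros. unfold cl, Rmax, Rmin. repeat destruct Rle_dec; lra. Qed.
Lemma cl_cont b x : 0 <= b -> continuity_pt (cl b) x.
Proof.
  intros Hb. apply continuity_pt_locally. intros eps. exists eps. intros u Hu.
  eapply Rle_lt_trans. apply cl_lip; auto. exact Hu.
Qed.
Lemma cont_clamp (f : R -> R) b x : 0 <= b ->
  (forall t, 0 <= t <= b -> continuity_pt f t) -> continuity_pt (fun t => f (cl b t)) x.
Proof.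
  intros Hb H. apply (continuity_pt_comp (cl b) f x).
  apply cl_cont; auto. apply H, cl_in; auto.
Qed.

Lemma Rint_RInt f a b : ex_RInt f a b -> Rint f a b = RInt f a b.
Proof.
  intros H. unfold Rint. destruct excluded_middle_informative as [i|n].
  - rewrite (RInt_Reals f a b (epsilon i (fun _ => True))). reflexivity.
  - exfalso. apply n. constructor. apply ex_RInt_Reals_0. exact H.
Qed.



Lemma is_derive_eq (f : R -> R) x (l l' : R) : is_derive f x l -> @eq R l l' -> is_derive f x l'.
Proof. intros H ->; exact H. Qed.
Lemma isd_mul (f g : R -> R) x a b : is_derive f x a -> is_derive g x b ->
  is_derive (fun t => f t * g t) x (a * g x + f x * b).
Proof. intros Ha Hb. apply (is_derive_mult f g x a b Ha Hb). Qed.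
Lemma isd_add (f g : R -> R) x a b : is_derive f x a -> is_derive g x b ->
  is_derive (fun t => f t + g t) x (a + b).
Proof. intros Ha Hb. apply (is_derive_plus f g x a b Ha Hb). Qed.
Lemma isd_sub (f g : R -> R) x a b : is_derive f x a -> is_derive g x b ->
  is_derive (fun t => f t - g t) x (a - b).
Proof. intros Ha Hb. apply (is_derive_minus f g x a b Ha Hb). Qed.

Definition CD (f : R -> Cx) (x : R) (l : Cx) :=
  is_derive (fun t => fst (f t)) x (fst l) /\ is_derive (fun t => snd (f t)) x (snd l).

Lemma CD_eq f x l l' : CD f x l -> l = l' -> CD f x l'.
Proof. intros H ->; exact H. Qed.
Lemma CD_add f g x a b : CD f x a -> CD g x b -> CD (fun t => Cadd (f t) (g t)) x (Cadd a b).
Proof. intros [] []; split; simpl; apply isd_add; auto. Qed.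
Lemma CD_sub f g x a b : CD f x a -> CD g x b -> CD (fun t => Csub (f t) (g t)) x (Csub a b).
Proof. intros [] []; split; simpl; apply isd_sub; auto. Qed.
Lemma CD_mul f g x a b : CD f x a -> CD g x b ->
  CD (fun t => Cmul (f t) (g t)) x (Cadd (Cmul a (g x)) (Cmul (f x) b)).
Proof.
  intros [Ha1 Ha2] [Hb1 Hb2]; split; simpl.
  - eapply is_derive_eq. apply isd_sub; apply isd_mul; eauto.
    unfold Re, Im; simpl; ring.
  - eapply is_derive_eq. apply isd_add; apply isd_mul; eauto.
    unfold Re, Im; simpl; ring.
Qed.
Lemma CD_scal (r : R -> R) f x dr a : is_derive r x dr -> CD f x a ->
  CD (fun t => Cscal (r t) (f t)) x (Cadd (Cscal dr (f x)) (Cscal (r x) a)).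
Proof.
  intros Hr [Ha1 Ha2]; split; simpl.
  - eapply is_derive_eq. apply isd_mul; eauto. unfold Re, Im; simpl; ring.
  - eapply is_derive_eq. apply isd_mul; eauto. unfold Re, Im; simpl; ring.
Qed.
Lemma CD_const c x : CD (fun _ => c) x (0,0).
Proof. split; simpl; apply is_derive_Reals; apply derivable_pt_lim_const. Qed.
Lemma CD_ext f g x l : (forall t, f t = g t) -> CD f x l -> CD g x l.
Proof.
  intros E [H1 H2]; split.
  - eapply is_derive_ext; [|exact H1]. intros; simpl; rewrite E; auto.
  - eapply is_derive_ext; [|exact H2]. intros; simpl; rewrite E; auto.
Qed.

Definition CC (f : R -> Cx) (x : R) :=
  continuity_pt (fun t => fst (f t)) x /\ continuity_pt (fun t => snd (f t)) x.

Lemma isd_cont f x l : is_derive f x l -> continuity_pt f x.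
Proof.
  intros H. apply continuity_pt_filterlim. apply (ex_derive_continuous f x). exists l; exact H.
Qed.
Lemma CD_CC f x l : CD f x l -> CC f x.
Proof. intros [H1 H2]; split; eapply isd_cont; eauto. Qed.
Lemma CC_add f g x : CC f x -> CC g x -> CC (fun t => Cadd (f t) (g t)) x.
Proof. intros [] []; split; simpl; apply continuity_pt_plus; auto. Qed.
Lemma CC_sub f g x : CC f x -> CC g x -> CC (fun t => Csub (f t) (g t)) x.
Proof. intros [] []; split; simpl; apply continuity_pt_minus; auto. Qed.
Lemma CC_mul f g x : CC f x -> CC g x -> CC (fun t => Cmul (f t) (g t)) x.
Proof.
  intros [] []; split; simpl.
  - apply continuity_pt_minus; apply continuity_pt_mult; auto.
  - apply continuity_pt_plus; apply continuity_pt_mult; auto.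
Qed.
Lemma CC_scal (r : R -> R) f x : continuity_pt r x -> CC f x -> CC (fun t => Cscal (r t) (f t)) x.
Proof. intros ? []; split; simpl; apply continuity_pt_mult; auto. Qed.
Lemma CC_const c x : CC (fun _ => c) x.
Proof. split; apply continuity_pt_const; intros ? ?; auto. Qed.
Lemma CC_ext f g x : (forall t, f t = g t) -> CC f x -> CC g x.
Proof.
  intros E [H1 H2]; split.
  - eapply continuity_pt_ext; [|exact H1]. intros; simpl; rewrite E; auto.
  - eapply continuity_pt_ext; [|exact H2]. intros; simpl; rewrite E; auto.
Qed.
Lemma CC_Cmod f x : CC f x -> continuity_pt (fun t => Cmod (f t)) x.
Proof.
  intros [H1 H2]. unfold Cmod.
  apply (continuity_pt_comp (fun t => Re (f t) ^ 2 + Im (f t) ^ 2) sqrt x).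
  - apply continuity_pt_plus; apply continuity_pt_mult; auto;
      (apply continuity_pt_mult; [auto| apply continuity_pt_const; intros ? ?; auto]).
  - apply continuity_pt_sqrt. nra.
Qed.



Definition CI (f : R -> Cx) a b : Cx :=
  (RInt (fun t => fst (f t)) a b, RInt (fun t => snd (f t)) a b).

Lemma exRI (f : R -> R) a b : a <= b -> (forall x, a <= x <= b -> continuity_pt f x) -> ex_RInt f a b.
Proof.
  intros Hab H. apply (ex_RInt_continuous (V:=R_CompleteNormedModule)). rewrite Rmin_left, Rmax_right by lra.
  intros z Hz. apply continuity_pt_filterlim. auto.
Qed.

Lemma CI_FTC f df a b : a <= b -> (forall x, a <= x <= b -> CD f x (df x)) ->
  (forall x, a <= x <= b -> CC df x) -> CI df a b = Csub (f b) (f a).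
Proof.
  intros Hab HD HC. unfold CI, Csub, Re, Im. f_equal; apply is_RInt_unique.
  - apply (is_RInt_derive (fun t => fst (f t)) (fun t => fst (df t))).
    + rewrite Rmin_left, Rmax_right by lra. intros; apply HD; auto.
    + rewrite Rmin_left, Rmax_right by lra. intros; apply continuity_pt_filterlim, HC; auto.
  - apply (is_RInt_derive (fun t => snd (f t)) (fun t => snd (df t))).
    + rewrite Rmin_left, Rmax_right by lra. intros; apply HD; auto.
    + rewrite Rmin_left, Rmax_right by lra. intros; apply continuity_pt_filterlim, HC; auto.
Qed.

Lemma CI_ext f g a b : a <= b -> (forall x, a <= x <= b -> f x = g x) -> CI f a b = CI g a b.
Proof.
  intros Hab H. unfold CI. f_equal; apply RInt_ext; rewrite Rmin_left, Rmax_right by lra;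
  intros x Hx; rewrite H; auto; lra.
Qed.

Lemma CI_sub f g a b : a <= b -> (forall x, a <= x <= b -> CC f x) -> (forall x, a <= x <= b -> CC g x) ->
  CI (fun t => Csub (f t) (g t)) a b = Csub (CI f a b) (CI g a b).
Proof.
  intros Hab Hf Hg. unfold CI, Csub, Re, Im; simpl. f_equal.
  - apply (RInt_minus (V:=R_CompleteNormedModule) (fun t => fst (f t)) (fun t => fst (g t)));
    apply exRI; auto; intros; [apply Hf|apply Hg]; auto.
  - apply (RInt_minus (V:=R_CompleteNormedModule) (fun t => snd (f t)) (fun t => snd (g t)));
    apply exRI; auto; intros; [apply Hf|apply Hg]; auto.
Qed.

Lemma CI_add f g a b : a <= b -> (forall x, a <= x <= b -> CC f x) -> (forall x, a <= x <= b -> CC g x) ->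
  CI (fun t => Cadd (f t) (g t)) a b = Cadd (CI f a b) (CI g a b).
Proof.
  intros Hab Hf Hg. unfold CI, Cadd, Re, Im; simpl. f_equal.
  - apply (RInt_plus (V:=R_CompleteNormedModule) (fun t => fst (f t)) (fun t => fst (g t)));
    apply exRI; auto; intros; [apply Hf|apply Hg]; auto.
  - apply (RInt_plus (V:=R_CompleteNormedModule) (fun t => snd (f t)) (fun t => snd (g t)));
    apply exRI; auto; intros; [apply Hf|apply Hg]; auto.
Qed.

Lemma CS a b c d : a * c + b * d <= sqrt (a ^ 2 + b ^ 2) * sqrt (c ^ 2 + d ^ 2).
Proof.
  rewrite <- sqrt_mult_alt by nra.
  destruct (Rle_or_lt (a * c + b * d) 0) as [H|H].
  - pose proof (sqrt_pos ((a ^ 2 + b ^ 2) * (c ^ 2 + d ^ 2))). lra.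
  - rewrite <- (sqrt_pow2 (a * c + b * d)) by lra. apply sqrt_le_1_alt.
    pose proof (pow2_ge_0 (a*d-b*c)). nra.
Qed.

Lemma CI_norm f a b : a <= b -> (forall x, a <= x <= b -> CC f x) ->
  Cmod (CI f a b) <= RInt (fun t => Cmod (f t)) a b.
Proof.
  intros Hab Hf.
  assert (E1 : ex_RInt (fun t => fst (f t)) a b) by (apply exRI; auto; intros; apply Hf; auto).
  assert (E2 : ex_RInt (fun t => snd (f t)) a b) by (apply exRI; auto; intros; apply Hf; auto).
  assert (E3 : ex_RInt (fun t => Cmod (f t)) a b) by (apply exRI; auto; intros; apply CC_Cmod, Hf; auto).
  set (A := RInt (fun t => fst (f t)) a b). set (B := RInt (fun t => snd (f t)) a b).
  set (m := Cmod (CI f a b)).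
  assert (Hm : m = sqrt (A ^ 2 + B ^ 2)) by reflexivity.
  assert (I0 : 0 <= RInt (fun t => Cmod (f t)) a b).
  { rewrite <- (RInt_point a (fun _ => 0)) at 1.
    replace (RInt (fun _ : R => 0) a a) with (RInt (fun _ : R => 0) a b).
    2:{ rewrite !RInt_const. unfold scal; simpl; unfold mult; simpl; ring. }
    apply RInt_le; auto. apply ex_RInt_const. intros; apply Cmod_ge0. }
  destruct (Rle_or_lt m 0) as [H0|H0]. lra.
  assert (Key : m * m <= m * RInt (fun t => Cmod (f t)) a b).
  { assert (Hmm : m * m = RInt (fun t => A * fst (f t) + B * snd (f t)) a b).
    { assert (HH : is_RInt (fun t => A * fst (f t) + B * snd (f t)) a b (A * A + B * B)).
      { exact (is_RInt_plus (V:=R_NormedModule) _ _ a b _ _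
          (is_RInt_scal _ a b A _ (RInt_correct _ a b E1))
          (is_RInt_scal _ a b B _ (RInt_correct _ a b E2))). }
      rewrite (is_RInt_unique _ _ _ _ HH). rewrite Hm. rewrite sqrt_sqrt by nra. ring. }
    rewrite Hmm.
    rewrite <- (RInt_scal (V:=R_CompleteNormedModule)) by auto.
    apply RInt_le; auto.
    - apply exRI; auto. intros x Hx; destruct (Hf x Hx).
      apply continuity_pt_plus; apply continuity_pt_mult; auto;
        apply continuity_pt_const; intros ? ?; auto.
    - apply exRI; auto. intros x Hx.
      apply continuity_pt_mult. apply continuity_pt_const; intros ? ?; auto.
      apply CC_Cmod, Hf; auto.
    - intros x Hx. unfold scal; simpl; unfold mult; simpl. rewrite Hm.
      unfold Cmod, Re, Im. apply CS. }
  apply Rmult_le_reg_l with m; lra.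
Qed.

Lemma CI_bound f a b B : a <= b -> (forall x, a <= x <= b -> CC f x) ->
  (forall x, a <= x <= b -> Cmod (f x) <= B) -> Cmod (CI f a b) <= (b - a) * B.
Proof.
  intros Hab Hf HB. eapply Rle_trans. apply CI_norm; auto.
  replace ((b - a) * B) with (RInt (fun _ => B) a b).
  2:{ rewrite RInt_const. unfold scal; simpl; unfold mult; simpl; ring. }
  apply RInt_le; auto. apply exRI; auto; intros; apply CC_Cmod, Hf; auto.
  apply ex_RInt_const. intros; apply HB; lra.
Qed.

Lemma Cint_CI f a b : a <= b -> (forall x, a <= x <= b -> CC f x) -> Cint f a b = CI f a b.
Proof.
  intros Hab Hf. unfold Cint, CI, Re, Im.
  rewrite (Rint_RInt (fun x => fst (f x))), (Rint_RInt (fun x => snd (f x))); [reflexivity| |];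
  apply exRI; auto; intros; apply Hf; auto.
Qed.



Lemma exRI_all (f : R -> R) a b : (forall x, continuity_pt f x) -> ex_RInt f a b.
Proof.
  intros H. apply (ex_RInt_continuous (V:=R_CompleteNormedModule)). intros; apply continuity_pt_filterlim; auto.
Qed.

Lemma is_derive_RInt_all (f : R -> R) x : (forall t, continuity_pt f t) ->
  is_derive (fun t => RInt f 0 t) x (f x).
Proof.
  intros H. apply (is_derive_RInt (V:=R_NormedModule) f (fun t => RInt f 0 t) 0 x).
  - apply filter_forall. intros; apply (RInt_correct (V:=R_CompleteNormedModule)), exRI_all; auto.
  - apply continuity_pt_filterlim; auto.
Qed.

Lemma gronwall (v : R -> R) b A L : 0 <= b -> 0 <= A -> 0 <= L ->
  (forall x, 0 <= x <= b -> continuity_pt v x) ->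
  (forall x, 0 <= x <= b -> v x <= A + L * RInt v 0 x) ->
  forall x, 0 <= x <= b -> v x <= A * exp (L * x).
Proof.
  intros Hb HA HL Hc Hv x Hx.
  set (vc := fun t => v (cl b t)).
  assert (Cvc : forall t, continuity_pt vc t) by (intros; apply cont_clamp; auto).
  set (U := fun t => RInt vc 0 t).
  assert (EU : forall t, 0 <= t <= b -> RInt v 0 t = U t).
  { intros t Ht. apply RInt_ext. rewrite Rmin_left, Rmax_right by lra. intros y Hy.
    unfold vc. rewrite cl_id; auto; lra. }
  assert (dU : forall t, is_derive U t (vc t)) by (intros; apply is_derive_RInt_all; auto).
  set (H := fun t => (A + L * U t) * exp (- L * t)).
  set (dH := fun t => (L * vc t) * exp (- L * t) + (A + L * U t) * (- L * exp (- L * t))).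
  assert (dHd : forall t, is_derive H t (dH t)).
  { intros t. unfold H, dH. eapply is_derive_eq. apply isd_mul.
    - apply isd_add. apply is_derive_Reals, derivable_pt_lim_const.
      apply isd_mul. apply is_derive_Reals, derivable_pt_lim_const. apply dU.
    - apply is_derive_Reals. apply (derivable_pt_lim_comp (fun t => - L * t) exp).
      apply is_derive_Reals. auto_derive; auto. apply derivable_pt_lim_exp.
    - cbv beta. ring. }
  destruct (Req_dec x 0) as [Hx0|Hx0].
  { subst x. rewrite Rmult_0_r, exp_0, Rmult_1_r.
    pose proof (Hv 0 ltac:(lra)) as H0. rewrite RInt_point in H0.
    unfold zero in H0; simpl in H0. lra. }
  destruct (MVT_gen H 0 x dH) as [c [Hc1 Hc2]].
  - intros; apply dHd.
  - intros; eapply isd_cont; apply dHd.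
  - rewrite Rmin_left, Rmax_right in Hc1 by lra.
    assert (HdH : dH c <= 0).
    { unfold dH. pose proof (Hv c ltac:(lra)). rewrite EU in H0 by lra.
      unfold vc. rewrite cl_id by lra. pose proof (exp_pos (- L * c)).
      assert (L * v c <= L * (A + L * U c)) by (apply Rmult_le_compat_l; auto). nra. }
    assert (H0 : H 0 = A).
    { unfold H, U. rewrite RInt_point. unfold zero; simpl. replace (- L * 0) with 0 by ring. rewrite exp_0. ring. }
    assert (Hxle : H x <= A) by nra.
    unfold H in Hxle.
    assert (E : exp (- L * x) * exp (L * x) = 1).
    { rewrite <- exp_plus. replace (- L * x + L * x) with 0 by ring. apply exp_0. }
    pose proof (exp_pos (L * x)).
    assert (A + L * U x <= A * exp (L * x)).
    { replace (A + L * U x) with ((A + L * U x) * exp (- L * x) * exp (L * x)) by (rewrite Rmult_assoc, E; ring).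
      apply Rmult_le_compat_r; lra. }
    pose proof (Hv x Hx). rewrite EU in H3 by lra. lra.
Qed.



Lemma RInt_scal_R (f : R -> R) a b c : ex_RInt f a b -> @eq R (RInt (fun t => c * f t) a b) (c * RInt f a b).
Proof. intros H. exact (RInt_scal (V:=R_CompleteNormedModule) f a b c H). Qed.
Lemma RInt_plus_R (f g : R -> R) a b : ex_RInt f a b -> ex_RInt g a b ->
  @eq R (RInt (fun t => f t + g t) a b) (RInt f a b + RInt g a b).
Proof. intros H1 H2. exact (RInt_plus (V:=R_CompleteNormedModule) f g a b H1 H2). Qed.
Lemma RInt_const_R a b c : @eq R (RInt (fun _ => c) a b) ((b - a) * c).
Proof. rewrite RInt_const. reflexivity. Qed.

Lemma RInt_mono_c (f h : R -> R) a b c : a <= b ->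
  (forall t, a <= t <= b -> continuity_pt f t) -> (forall t, a <= t <= b -> continuity_pt h t) ->
  (forall t, a <= t <= b -> c * f t <= h t) -> c * RInt f a b <= RInt h a b.
Proof.
  intros Hab Hf Hh H. rewrite <- RInt_scal_R by (apply exRI; auto).
  apply RInt_le; auto.
  - apply exRI; auto. intros; apply continuity_pt_mult; auto. apply continuity_pt_const; intros ? ?; auto.
  - apply exRI; auto.
  - intros; apply H; lra.
Qed.

Lemma cont_exp_lin k t : continuity_pt (fun x => exp (k * x)) t.
Proof.
  apply derivable_continuous_pt. apply (derivable_pt_comp (fun x => k * x) exp).
  apply derivable_pt_mult. apply derivable_pt_const. apply derivable_pt_id. apply derivable_pt_exp.
Qed.

Lemma isd_explin k t : is_derive (fun x => exp (k * x)) t (k * exp (k * t)).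
Proof. auto_derive; auto. ring. Qed.

Definition Ci : Cx := (0, 1).

Lemma pbound (sg ta : R) (y dy g : R -> Cx) (z : Cx) :
  z = Cmul (sg, ta) (sg, ta) -> y 0 = (0, 0) -> dy 0 = (0, 0) ->
  (forall x, 0 <= x <= PI -> CD y x (dy x)) ->
  (forall x, 0 <= x <= PI -> CD dy x (Csub (g x) (Cmul z (y x)))) ->
  (forall x, 0 <= x <= PI -> CC g x) ->
  forall x, 0 <= x <= PI ->
  exp (- Rabs ta * x) * Cmod (Cadd (dy x) (Cmul (Cmul Ci (sg, ta)) (y x)))
  <= RInt (fun t => exp (- Rabs ta * t) * Cmod (g t)) 0 x.
Proof.
  intros Hz Hy0 Hdy0 Hy Hdy Hg x Hx.
  set (E := fun t => (exp (ta * t) * cos (sg * t), - (exp (ta * t) * sin (sg * t)))).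
  assert (dE : forall t, CD E t (Cmul (ta, - sg) (E t))).
  { intros t; split; unfold E; simpl; auto_derive; auto; unfold Re, Im; simpl; ring. }
  set (p := fun t => Cadd (dy t) (Cmul (Cmul Ci (sg, ta)) (y t))).
  assert (dp : forall t, 0 <= t <= PI ->
     CD p t (Cadd (Csub (g t) (Cmul z (y t))) (Cmul (Cmul Ci (sg, ta)) (dy t)))).
  { intros t Ht. unfold p. eapply CD_eq. apply CD_add. apply Hdy; auto.
    apply CD_mul. apply CD_const. apply Hy; auto.
    f_equal. unfold Cadd, Cmul, Re, Im; simpl. f_equal; ring. }
  set (P := fun t => Cmul (E t) (p t)).
  assert (dP : forall t, 0 <= t <= PI -> CD P t (Cmul (E t) (g t))).
  { intros t Ht. unfold P. eapply CD_eq. apply CD_mul. apply dE. apply dp; auto.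
    unfold p. subst z. generalize (E t) (y t) (dy t) (g t). intros [e1 e2] [y1 y2] [d1 d2] [g1 g2].
    unfold Cadd, Csub, Cmul, Ci, Re, Im; simpl. f_equal; ring. }
  assert (CE : forall t, CC E t) by (intros; eapply CD_CC; apply dE).
  assert (FT : CI (fun t => Cmul (E t) (g t)) 0 x = Csub (P x) (P 0)).
  { apply CI_FTC. lra. intros; apply dP; lra. intros; apply CC_mul; auto; apply Hg; lra. }
  assert (P0 : P 0 = (0, 0)).
  { unfold P, p. rewrite Hy0, Hdy0. unfold Cmul, Cadd, Re, Im; simpl. f_equal; ring. }
  rewrite P0 in FT.
  assert (FT' : CI (fun t => Cmul (E t) (g t)) 0 x = P x).
  { rewrite FT. unfold Csub, Re, Im. destruct (P x); simpl. f_equal; ring. }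
  assert (ME : forall t, Cmod (E t) = exp (ta * t)).
  { intros t. unfold Cmod, E, Re, Im; simpl. pose proof (exp_pos (ta * t)).
    pose proof (sin2_cos2 (sg * t)). unfold Rsqr in H0.
    match goal with |- sqrt ?X = _ => replace X with (exp (ta * t) ^ 2) end.
    apply sqrt_pow2; lra.
    replace (exp (ta * t) ^ 2) with (exp (ta * t) ^ 2 * (sin (sg * t) * sin (sg * t) + cos (sg * t) * cos (sg * t))) by (rewrite H0; ring). ring. }
  assert (Hn : Cmod (P x) <= RInt (fun t => exp (ta * t) * Cmod (g t)) 0 x).
  { rewrite <- FT'. eapply Rle_trans. apply CI_norm. lra.
    intros; apply CC_mul; auto; apply Hg; lra.
    right. apply RInt_ext. intros t _. rewrite Cmod_mul, ME. reflexivity. }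
  assert (MP : Cmod (P x) = exp (ta * x) * Cmod (p x)) by (unfold P; rewrite Cmod_mul, ME; auto).
  fold (p x).
  assert (Hc : forall t, 0 <= t <= PI -> continuity_pt (fun t => Cmod (g t)) t) by (intros; apply CC_Cmod, Hg; auto).
  replace (exp (- Rabs ta * x) * Cmod (p x)) with (exp (- Rabs ta * x - ta * x) * Cmod (P x)).
  2:{ rewrite MP. replace (- Rabs ta * x) with ((- Rabs ta * x - ta * x) + ta * x) at 2 by ring.
      rewrite exp_plus. ring. }
  eapply Rle_trans. apply Rmult_le_compat_l. left; apply exp_pos. exact Hn.
  apply RInt_mono_c. lra.
  - intros; apply continuity_pt_mult. apply cont_exp_lin. apply Hc; lra.
  - intros; apply continuity_pt_mult. apply cont_exp_lin. apply Hc; lra.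
  - intros t Ht. rewrite <- Rmult_assoc, <- exp_plus. apply Rmult_le_compat_r. apply Cmod_ge0.
    destruct (Rle_or_lt (- Rabs ta * x - ta * x + ta * t) (- Rabs ta * t)) as [Hle|Hlt].
    + destruct Hle as [Hlt|Heq]. left; apply exp_increasing; auto. right; rewrite Heq; auto.
    + exfalso. assert (ta * (t - x) <= Rabs ta * (x - t)).
      { assert (0 <= x - t) by lra. assert (- ta <= Rabs ta) by (split_Rabs; lra). nra. }
      lra.
Qed.



Lemma RInt_ge0 (f : R -> R) a b : a <= b -> (forall t, a <= t <= b -> continuity_pt f t) ->
  (forall t, a <= t <= b -> 0 <= f t) -> 0 <= RInt f a b.
Proof.
  intros Hab Hc H. assert (E0 : @eq R (RInt (fun _ => 0) a b) 0) by (rewrite RInt_const_R; ring). rewrite <- E0.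
  apply RInt_le; auto. apply ex_RInt_const. apply exRI; auto. intros; apply H; lra.
Qed.

Lemma RInt_le_c (f : R -> R) a b c : a <= b -> (forall t, a <= t <= b -> continuity_pt f t) ->
  (forall t, a <= t <= b -> f t <= c) -> RInt f a b <= (b - a) * c.
Proof.
  intros Hab Hc H. rewrite <- RInt_const_R.
  apply RInt_le; auto. apply exRI; auto. apply ex_RInt_const. intros; apply H; lra.
Qed.

Definition Kc (M : R) := M * PI * exp ((1 + M) * PI) + M * PI * (M * PI * exp ((1 + M) * PI) + 1).

Lemma Kc_ge0 M : 0 <= M -> 0 <= Kc M.
Proof.
  intros HM. unfold Kc. pose proof PI_RGT_0. pose proof (exp_pos ((1 + M) * PI)).
  assert (0 <= M * PI) by nra. assert (0 <= M * PI * exp ((1 + M) * PI)) by nra. nra.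
Qed.

Lemma core (sg ta M : R) (y dy g : R -> Cx) : 0 <= M ->
  y 0 = (0, 0) -> dy 0 = (0, 0) ->
  (forall x, 0 <= x <= PI -> CD y x (dy x)) ->
  (forall x, 0 <= x <= PI -> CD dy x (Csub (g x) (Cmul (Cmul (sg, ta) (sg, ta)) (y x)))) ->
  (forall x, 0 <= x <= PI -> CC g x) ->
  (forall x, 0 <= x <= PI -> Cmod (g x) <= M * (Cmod (y x) + exp (Rabs ta * x))) ->
  forall x, 0 <= x <= PI ->
    Cmod (y x) <= Kc M * exp (Rabs ta * x) /\
    Cmod (sg, ta) * Cmod (y x) <= Kc M * exp (Rabs ta * x) /\
    Cmod (dy x) <= Kc M * exp (Rabs ta * x).
Proof.
  intros HM Hy0 Hdy0 Hy Hdy Hg Hgb.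
  set (a := Rabs ta).
  assert (Ha : 0 <= a) by apply Rabs_pos.
  pose proof PI_RGT_0 as HPI.
  pose proof (pbound sg ta y dy g _ eq_refl Hy0 Hdy0 Hy Hdy Hg) as P1.
  assert (Hz2 : Cmul (sg, ta) (sg, ta) = Cmul (- sg, - ta) (- sg, - ta)).
  { unfold Cmul, Re, Im; simpl; f_equal; ring. }
  rewrite Hz2 in Hdy.
  pose proof (pbound (- sg) (- ta) y dy g _ eq_refl Hy0 Hdy0 Hy Hdy Hg) as P2.
  rewrite <- Hz2 in Hdy.
  rewrite Rabs_Ropp in P2. fold a in P1, P2.
  set (G := fun x => RInt (fun t => exp (- a * t) * Cmod (g t)) 0 x).
  set (sy := fun x => Cmul (Cmul Ci (sg, ta)) (y x)).
  assert (Msy : forall x, Cmod (sy x) = Cmod (sg, ta) * Cmod (y x)).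
  { intros x. unfold sy. rewrite !Cmod_mul. replace (Cmod Ci) with 1. ring.
    unfold Cmod, Ci, Re, Im; simpl. rewrite <- sqrt_1 at 1. f_equal. ring. }
  assert (Bdy : forall x, 0 <= x <= PI -> exp (- a * x) * Cmod (dy x) <= G x).
  { intros x Hx. specialize (P1 x Hx). specialize (P2 x Hx).
    assert (E : Cadd (Cadd (dy x) (Cmul (Cmul Ci (sg, ta)) (y x)))
                     (Cadd (dy x) (Cmul (Cmul Ci (- sg, - ta)) (y x))) = Cscal 2 (dy x)).
    { generalize (dy x) (y x); intros [d1 d2] [y1 y2]. unfold Cadd, Cmul, Cscal, Ci, Re, Im; simpl; f_equal; ring. }
    pose proof (Cmod_add (Cadd (dy x) (Cmul (Cmul Ci (sg, ta)) (y x)))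
                     (Cadd (dy x) (Cmul (Cmul Ci (- sg, - ta)) (y x)))) as T.
    rewrite E, Cmod_scal, Rabs_right in T by lra.
    pose proof (exp_pos (- a * x)). unfold G. nra. }
  assert (Bsy : forall x, 0 <= x <= PI -> exp (- a * x) * Cmod (sy x) <= G x).
  { intros x Hx. specialize (P1 x Hx). specialize (P2 x Hx).
    assert (E : Csub (Cadd (dy x) (Cmul (Cmul Ci (sg, ta)) (y x)))
                     (Cadd (dy x) (Cmul (Cmul Ci (- sg, - ta)) (y x))) = Cscal 2 (sy x)).
    { unfold sy. generalize (dy x) (y x); intros [d1 d2] [y1 y2]. unfold Csub, Cadd, Cmul, Cscal, Ci, Re, Im; simpl; f_equal; ring. }
    pose proof (Cmod_sub (Cadd (dy x) (Cmul (Cmul Ci (sg, ta)) (y x)))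
                     (Cadd (dy x) (Cmul (Cmul Ci (- sg, - ta)) (y x)))) as T.
    rewrite E, Cmod_scal, Rabs_right in T by lra.
    pose proof (exp_pos (- a * x)). unfold G. nra. }
  set (u := fun t => exp (- a * t) * Cmod (y t)).
  set (w := fun t => exp (- a * t) * Cmod (dy t)).
  assert (Cu : forall t, 0 <= t <= PI -> continuity_pt u t).
  { intros; apply continuity_pt_mult. apply cont_exp_lin. apply CC_Cmod. eapply CD_CC; apply Hy; auto. }
  assert (Cw : forall t, 0 <= t <= PI -> continuity_pt w t).
  { intros; apply continuity_pt_mult. apply cont_exp_lin. apply CC_Cmod. eapply CD_CC; apply Hdy; auto. }
  assert (u0 : forall t, 0 <= t <= PI -> 0 <= u t).
  { intros; unfold u. pose proof (exp_pos (- a * t)); pose proof (Cmod_ge0 (y t)); nra. }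
  assert (w0 : forall t, 0 <= t <= PI -> 0 <= w t).
  { intros; unfold w. pose proof (exp_pos (- a * t)); pose proof (Cmod_ge0 (dy t)); nra. }
  assert (BG : forall x, 0 <= x <= PI -> G x <= M * RInt u 0 x + M * x).
  { intros x Hx. unfold G.
    assert (EI : @eq R (RInt (fun t => M * u t + M) 0 x) (M * RInt u 0 x + M * x)).
    { rewrite RInt_plus_R, RInt_scal_R, RInt_const_R. ring.
        apply exRI; try lra; intros; apply Cu; lra.
        apply exRI; try lra; intros; apply continuity_pt_mult. apply continuity_pt_const; intros ? ?; auto. apply Cu; lra.
        apply ex_RInt_const. }
    rewrite <- EI. apply RInt_le; try lra.
    - apply exRI; try lra. intros; apply continuity_pt_mult. apply cont_exp_lin. apply CC_Cmod, Hg; lra.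
    - apply exRI; try lra. intros; apply continuity_pt_plus. apply continuity_pt_mult.
      apply continuity_pt_const; intros ? ?; auto. apply Cu; lra. apply continuity_pt_const; intros ? ?; auto.
    - intros t Ht. unfold u. pose proof (Hgb t ltac:(lra)). pose proof (exp_pos (- a * t)).
      assert (EE : exp (- a * t) * exp (a * t) = 1).
      { rewrite <- exp_plus. replace (- a * t + a * t) with 0 by ring. apply exp_0. }
      apply Rle_trans with (exp (- a * t) * (M * (Cmod (y t) + exp (a * t)))).
      fold a in H. apply Rmult_le_compat_l; lra. right.
      replace (exp (- a * t) * (M * (Cmod (y t) + exp (a * t)))) with
        (M * (exp (- a * t) * Cmod (y t)) + M * (exp (- a * t) * exp (a * t))) by ring.
      rewrite EE. ring. }
  assert (Bu : forall x, 0 <= x <= PI -> u x <= RInt w 0 x).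
  { intros x Hx. unfold u.
    assert (FT : CI dy 0 x = y x).
    { rewrite (CI_FTC y dy 0 x). rewrite Hy0. unfold Csub, Re, Im. destruct (y x); simpl; f_equal; ring.
      lra. intros; apply Hy; lra. intros; eapply CD_CC; apply Hdy; lra. }
    rewrite <- FT.
    eapply Rle_trans. apply Rmult_le_compat_l. left; apply exp_pos.
    apply CI_norm. lra. intros; eapply CD_CC; apply Hdy; lra.
    apply RInt_mono_c. lra.
    - intros; apply CC_Cmod; eapply CD_CC; apply Hdy; lra.
    - intros; apply Cw; lra.
    - intros t Ht. unfold w. apply Rmult_le_compat_r. apply Cmod_ge0.
      destruct (Req_dec a 0) as [A0|A0]. rewrite A0; right; f_equal; ring.
      destruct (Req_dec t x) as [T0|T0]. rewrite T0; lra.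
      left. apply exp_increasing. nra. }
  set (v := fun t => u t + w t).
  assert (Cv : forall t, 0 <= t <= PI -> continuity_pt v t) by (intros; apply continuity_pt_plus; auto).
  assert (Bv : forall x, 0 <= x <= PI -> v x <= M * PI + (1 + M) * RInt v 0 x).
  { intros x Hx. unfold v at 1.
    assert (IV : RInt v 0 x = RInt u 0 x + RInt w 0 x).
    { apply RInt_plus_R; apply exRI; try lra; intros; [apply Cu|apply Cw]; lra. }
    rewrite IV.
    assert (0 <= RInt u 0 x) by (apply RInt_ge0; try lra; intros; [apply Cu|apply u0]; lra).
    assert (0 <= RInt w 0 x) by (apply RInt_ge0; try lra; intros; [apply Cw|apply w0]; lra).
    pose proof (Bu x Hx). pose proof (Bdy x Hx). pose proof (BG x Hx).
    change (exp (- a * x) * Cmod (dy x)) with (w x) in H2. assert (M * x <= M * PI) by nra. assert (0 <= M * RInt w 0 x) by nra. nra. }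
  pose proof (gronwall v PI (M * PI) (1 + M) ltac:(lra) ltac:(nra) ltac:(lra) Cv Bv) as Gr.
  assert (Bv2 : forall x, 0 <= x <= PI -> v x <= M * PI * exp ((1 + M) * PI)).
  { intros x Hx. eapply Rle_trans. apply Gr; auto. apply Rmult_le_compat_l. nra.
    destruct (Req_dec x PI) as [->|]. lra. left; apply exp_increasing. nra. }
  set (K0 := M * PI * exp ((1 + M) * PI)).
  assert (K00 : 0 <= K0) by (unfold K0; pose proof (exp_pos ((1 + M) * PI)); apply Rmult_le_pos; [apply Rmult_le_pos|]; lra).
  fold K0 in Bv2.
  assert (HUa : forall t, 0 <= t <= PI -> u t <= K0).
  { intros t Ht; pose proof (Bv2 t Ht); pose proof (w0 t Ht); unfold v in *; lra. }
  assert (HWa : forall t, 0 <= t <= PI -> w t <= K0).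
  { intros t Ht; pose proof (Bv2 t Ht); pose proof (u0 t Ht); unfold v in *; lra. }
  assert (KK : K0 + M * PI * (K0 + 1) = Kc M) by (unfold Kc; fold K0; ring).
  assert (KP : 0 <= M * PI * (K0 + 1)) by (apply Rmult_le_pos; [apply Rmult_le_pos|]; lra).
  intros x Hx.
  assert (EE : exp (- a * x) * exp (a * x) = 1).
  { rewrite <- exp_plus. replace (- a * x + a * x) with 0 by ring. apply exp_0. }
  pose proof (exp_pos (a * x)). pose proof (exp_pos (- a * x)).
  assert (EX : forall X, X = exp (a * x) * (exp (- a * x) * X)).
  { intros X. rewrite <- Rmult_assoc, (Rmult_comm (exp (a * x))), EE. ring. }
  assert (Iu : RInt u 0 x <= (x - 0) * K0).
  { apply RInt_le_c; try lra. intros; apply Cu; lra. intros; apply HUa; lra. }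
  assert (HS : exp (- a * x) * Cmod (sy x) <= M * PI * (K0 + 1)).
  { eapply Rle_trans. apply Bsy; auto. eapply Rle_trans. apply BG; auto.
    assert (M * RInt u 0 x <= M * (x * K0)) by (apply Rmult_le_compat_l; lra).
    assert (M * (x * K0) <= M * (PI * K0)) by (apply Rmult_le_compat_l; [lra|]; apply Rmult_le_compat_r; lra).
    assert (M * x <= M * PI) by (apply Rmult_le_compat_l; lra).
    nra. }
  split; [|split].
  - rewrite (EX (Cmod (y x))). rewrite (Rmult_comm (Kc M)). apply Rmult_le_compat_l. lra.
    pose proof (HUa x Hx). unfold u in H1. lra.
  - rewrite <- Msy. rewrite (EX (Cmod (sy x))). rewrite (Rmult_comm (Kc M)). apply Rmult_le_compat_l. lra.
    lra.
  - rewrite (EX (Cmod (dy x))). rewrite (Rmult_comm (Kc M)). apply Rmult_le_compat_l. lra.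
    pose proof (HWa x Hx). unfold w in H1. lra.
Qed.



Lemma Csqrt_sq z : Cmul (Csqrt z) (Csqrt z) = z.
Proof.
  destruct z as [a b]. unfold Csqrt, Cmod, Cmul, Re, Im; cbn [fst snd].
  set (m := sqrt (a ^ 2 + b ^ 2)).
  assert (Hm : m * m = a ^ 2 + b ^ 2) by (unfold m; rewrite sqrt_sqrt; nra).
  assert (Hm0 : 0 <= m) by apply sqrt_pos.
  assert (Hma : Rabs a <= m).
  { rewrite <- sqrt_Rsqr_abs. unfold m. apply sqrt_le_1_alt. unfold Rsqr; nra. }
  assert (P0 : 0 <= (m + a) / 2) by (split_Rabs; lra).
  assert (Q0 : 0 <= (m - a) / 2) by (split_Rabs; lra).
  pose proof (sqrt_sqrt _ P0) as SP. pose proof (sqrt_sqrt _ Q0) as SQ.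
  assert (PQ : sqrt ((m + a) / 2) * sqrt ((m - a) / 2) = Rabs b / 2).
  { rewrite <- sqrt_mult_alt by lra.
    replace ((m + a) / 2 * ((m - a) / 2)) with ((Rabs b / 2) ^ 2).
    apply sqrt_pow2. pose proof (Rabs_pos b); lra.
    pose proof (pow2_abs b) as Hb2.
    transitivity (Rabs b ^ 2 / 4). field. rewrite Hb2.
    transitivity ((m * m - a * a) / 4). rewrite Hm. field. field. }
  destruct (Rle_dec 0 b) as [Hb|Hb]; f_equal.
  - replace (sqrt ((m + a) / 2) * sqrt ((m + a) / 2)) with ((m + a) / 2) by (symmetry; exact SP).
    replace (1 * sqrt ((m - a) / 2) * (1 * sqrt ((m - a) / 2))) with ((m - a) / 2) by (rewrite <- SQ at 1; ring). field.
  - replace (sqrt ((m + a) / 2) * (1 * sqrt ((m - a) / 2)) + 1 * sqrt ((m - a) / 2) * sqrt ((m + a) / 2))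
      with (2 * (sqrt ((m + a) / 2) * sqrt ((m - a) / 2))) by ring. rewrite PQ. rewrite Rabs_right by lra. field.
  - replace (sqrt ((m + a) / 2) * sqrt ((m + a) / 2)) with ((m + a) / 2) by (symmetry; exact SP).
    replace (-1 * sqrt ((m - a) / 2) * (-1 * sqrt ((m - a) / 2))) with ((m - a) / 2) by (rewrite <- SQ at 1; ring). field.
  - replace (sqrt ((m + a) / 2) * (-1 * sqrt ((m - a) / 2)) + -1 * sqrt ((m - a) / 2) * sqrt ((m + a) / 2))
      with (- (2 * (sqrt ((m + a) / 2) * sqrt ((m - a) / 2)))) by ring. rewrite PQ. rewrite Rabs_left by lra. field.
Qed.

Lemma Cmod_Csqrt z : Cmod (Csqrt z) = sqrt (Cmod z).
Proof.
  destruct z as [a b]. unfold Csqrt. set (m := Cmod (a, b)).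
  assert (Hma : Rabs a <= m).
  { rewrite <- sqrt_Rsqr_abs. unfold m, Cmod, Re, Im; simpl. apply sqrt_le_1_alt. unfold Rsqr; nra. }
  assert (P0 : 0 <= (m + Re (a, b)) / 2) by (simpl; split_Rabs; lra).
  assert (Q0 : 0 <= (m - Re (a, b)) / 2) by (simpl; split_Rabs; lra).
  unfold Cmod at 1, Re at 1 3, Im at 1; simpl fst; simpl snd. f_equal.
  assert (sg : forall e : R, (e = 1 \/ e = -1) -> forall q, (e * q) ^ 2 = q ^ 2) by (intros e [-> | ->] q; ring).
  unfold Im; cbn [snd]. rewrite sg by (destruct Rle_dec; auto). unfold Re in *; cbn [fst] in *.
  rewrite !pow2_sqrt by auto. field.
Qed.

Lemma cosh_sinh u : cosh u ^ 2 - sinh u ^ 2 = 1.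
Proof.
  unfold cosh, sinh. assert (E : exp u * exp (- u) = 1).
  { rewrite <- exp_plus. replace (u + - u) with 0 by ring. apply exp_0. }
  replace (((exp u + exp (- u)) / 2) ^ 2 - ((exp u - exp (- u)) / 2) ^ 2) with (exp u * exp (- u)) by field.
  exact E.
Qed.

Lemma cosh_pos u : 0 < cosh u.
Proof. unfold cosh. pose proof (exp_pos u); pose proof (exp_pos (- u)); lra. Qed.

Lemma cosh_le u : cosh u <= exp (Rabs u).
Proof.
  unfold cosh. assert (exp u <= exp (Rabs u)).
  { destruct (Rle_lt_or_eq_dec u (Rabs u)) as [H|H]. apply Rle_abs.
    left; apply exp_increasing; auto. rewrite <- H; lra. }
  assert (exp (- u) <= exp (Rabs u)).
  { destruct (Rle_lt_or_eq_dec (- u) (Rabs u)) as [H1|H1]. rewrite <- Rabs_Ropp. apply Rle_abs.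
    left; apply exp_increasing; auto. rewrite <- H1; lra. }
  lra.
Qed.

Lemma exp_mono u v : u <= v -> exp u <= exp v.
Proof. intros [H|H]. left; apply exp_increasing; auto. rewrite H; lra. Qed.

Definition cc (sg ta x : R) : Cx := (cos (x * sg) * cosh (x * ta), - (sin (x * sg) * sinh (x * ta))).
Definition dcc (sg ta x : R) : Cx :=
  (- sg * sin (x * sg) * cosh (x * ta) + ta * cos (x * sg) * sinh (x * ta),
   - (sg * cos (x * sg) * sinh (x * ta) + ta * sin (x * sg) * cosh (x * ta))).

Lemma cc_eq z x : Ccos (Cscal x (Csqrt z)) = cc (Re (Csqrt z)) (Im (Csqrt z)) x.
Proof. reflexivity. Qed.

Lemma isd_cosh f x df : is_derive f x df -> is_derive (fun t => cosh (f t)) x (df * sinh (f x)).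
Proof.
  intros H. apply is_derive_Reals. apply is_derive_Reals in H.
  replace (df * sinh (f x)) with (sinh (f x) * df) by ring.
  apply (derivable_pt_lim_comp f cosh); auto. apply derivable_pt_lim_cosh.
Qed.
Lemma isd_sinh f x df : is_derive f x df -> is_derive (fun t => sinh (f t)) x (df * cosh (f x)).
Proof.
  intros H. apply is_derive_Reals. apply is_derive_Reals in H.
  replace (df * cosh (f x)) with (cosh (f x) * df) by ring.
  apply (derivable_pt_lim_comp f sinh); auto. apply derivable_pt_lim_sinh.
Qed.
Lemma isd_lin k x : is_derive (fun t => t * k) x k.
Proof. auto_derive; auto. ring. Qed.

Lemma isd_opp (f : R -> R) x a : is_derive f x a -> is_derive (fun t => - f t) x (- a).
Proof. intros H. apply is_derive_Reals. apply is_derive_Reals in H. apply (derivable_pt_lim_opp f x a H). Qed.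

Lemma CD_cc sg ta x : CD (cc sg ta) x (dcc sg ta x).
Proof.
  split; unfold cc, dcc; simpl.
  - eapply is_derive_eq. apply isd_mul. auto_derive; auto. apply isd_cosh, isd_lin.
    cbv beta. ring.
  - eapply is_derive_eq. apply isd_opp. apply isd_mul. auto_derive; auto. apply isd_sinh, isd_lin.
    cbv beta. ring.
Qed.



Lemma CD_dcc sg ta x :
  CD (dcc sg ta) x (Csub (0, 0) (Cmul (Cmul (sg, ta) (sg, ta)) (cc sg ta x))).
Proof.
  split; unfold cc, dcc, Csub, Cmul, Re, Im; cbn [fst snd].
  - eapply is_derive_eq. apply isd_add.
    apply isd_mul. apply isd_mul. apply is_derive_Reals, derivable_pt_lim_const. auto_derive; auto.
    apply isd_cosh, isd_lin.
    apply isd_mul. apply isd_mul. apply is_derive_Reals, derivable_pt_lim_const. auto_derive; auto.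
    apply isd_sinh, isd_lin.
    cbv beta. ring.
  - eapply is_derive_eq. apply isd_opp. apply isd_add.
    apply isd_mul. apply isd_mul. apply is_derive_Reals, derivable_pt_lim_const. auto_derive; auto.
    apply isd_sinh, isd_lin.
    apply isd_mul. apply isd_mul. apply is_derive_Reals, derivable_pt_lim_const. auto_derive; auto.
    apply isd_cosh, isd_lin.
    cbv beta. ring.
Qed.

Lemma cc_bound sg ta x : 0 <= x -> Cmod (cc sg ta x) <= exp (Rabs ta * x).
Proof.
  intros Hx. assert (H1 : cosh (x * ta) <= exp (Rabs ta * x)) by (replace (Rabs ta * x) with (Rabs (x * ta)) by (rewrite Rabs_mult, (Rabs_right x) by lra; ring); apply cosh_le).
  pose proof (cosh_pos (x * ta)). pose proof (cosh_sinh (x * ta)).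
  pose proof (sin2_cos2 (x * sg)). unfold Rsqr in H2.
  apply Cmod_le. 2: pose proof (exp_pos (Rabs ta * x)); lra.
  unfold cc, Re, Im; cbn [fst snd].
  set (C := cos (x * sg)) in *. set (S := sin (x * sg)) in *.
  set (ch := cosh (x * ta)) in *. set (sh := sinh (x * ta)) in *.
  assert (C ^ 2 * ch ^ 2 + S ^ 2 * sh ^ 2 <= ch ^ 2).
  { assert (sh ^ 2 = ch ^ 2 - 1) by lra. rewrite H3.
    assert (S ^ 2 = 1 - C ^ 2) by (rewrite <- H2; ring). rewrite H4. nra. }
  assert (ch ^ 2 <= exp (Rabs ta * x) ^ 2) by (apply pow_incr; lra).
  nra.
Qed.

Lemma dcc_bound sg ta x : 0 <= x -> Cmod (dcc sg ta x) <= Cmod (sg, ta) * exp (Rabs ta * x).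
Proof.
  intros Hx. assert (H1 : cosh (x * ta) <= exp (Rabs ta * x)) by (replace (Rabs ta * x) with (Rabs (x * ta)) by (rewrite Rabs_mult, (Rabs_right x) by lra; ring); apply cosh_le).
  pose proof (cosh_pos (x * ta)). pose proof (cosh_sinh (x * ta)).
  pose proof (sin2_cos2 (x * sg)). unfold Rsqr in H2.
  pose proof (Cmod_ge0 (sg, ta)). pose proof (Cmod_sq (sg, ta)) as Hs. unfold Re, Im in Hs; cbn [fst snd] in Hs.
  apply Cmod_le. 2: pose proof (exp_pos (Rabs ta * x)); nra.
  unfold dcc, Re, Im; cbn [fst snd].
  set (C := cos (x * sg)) in *. set (S := sin (x * sg)) in *.
  set (ch := cosh (x * ta)) in *. set (sh := sinh (x * ta)) in *.
  set (e := exp (Rabs ta * x)) in *. set (m := Cmod (sg, ta)) in *.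
  assert (E : (- sg * S * ch + ta * C * sh) ^ 2 + (- (sg * C * sh + ta * S * ch)) ^ 2
             = (sg ^ 2 + ta ^ 2) * (S ^ 2 * ch ^ 2 + C ^ 2 * sh ^ 2)) by ring.
  rewrite E, <- Hs.
  assert (S ^ 2 * ch ^ 2 + C ^ 2 * sh ^ 2 <= ch ^ 2).
  { assert (sh ^ 2 = ch ^ 2 - 1) by lra. rewrite H4.
    assert (S ^ 2 = 1 - C ^ 2) by (rewrite <- H2; ring). rewrite H5. nra. }
  assert (ch ^ 2 <= e ^ 2) by (apply pow_incr; lra).
  assert (0 <= m ^ 2) by nra.
  replace ((m * e) ^ 2) with (m ^ 2 * e ^ 2) by ring.
  apply Rle_trans with (m ^ 2 * ch ^ 2). apply Rmult_le_compat_l; lra. apply Rmult_le_compat_l; lra.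
Qed.

Lemma V_unif V : abs_continuous_on V 0 PI -> forall eps, 0 < eps -> exists d, 0 < d /\
  forall x y, 0 <= x <= PI -> 0 <= y <= PI -> Rabs (x - y) < d -> Rabs (V x - V y) < eps.
Proof.
  intros hV eps He. destruct (hV eps He) as [d [Hd H]]. exists d; split; auto.
  intros x y Hx Hy Hxy. destruct (Rle_dec x y) as [Hle|Hle].
  - specialize (H (cons (x, y) nil)). simpl in H. rewrite Rabs_minus_sym.
    assert (Rabs (V y - V x) + 0 < eps). apply H. lra. split_Rabs; lra. lra.
  - specialize (H (cons (y, x) nil)). simpl in H.
    assert (Rabs (V x - V y) + 0 < eps). apply H. lra. split_Rabs; lra. lra.
Qed.

Lemma Vb_cont V : abs_continuous_on V 0 PI -> forall t, continuity_pt (fun x => V (cl PI x)) t.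
Proof.
  intros hV t. pose proof PI_RGT_0 as HPI. apply continuity_pt_locally. intros eps.
  destruct (V_unif V hV eps (cond_pos eps)) as [d [Hd H]].
  exists (mkposreal d Hd). intros u Hu. apply H; try (apply cl_in; lra).
  eapply Rle_lt_trans. apply cl_lip; lra. exact Hu.
Qed.

Lemma Vb_bound V : abs_continuous_on V 0 PI -> exists M, 0 <= M /\ forall x, Rabs (V (cl PI x)) <= M.
Proof.
  intros hV. pose proof PI_RGT_0.
  destruct (continuity_ab_maj (fun x => Rabs (V (cl PI x))) 0 PI) as [Mx [H1 H2]]. lra.
  intros; apply continuity_pt_comp with (f2 := Rabs). apply Vb_cont; auto. apply Rcontinuity_abs.
  exists (Rabs (V (cl PI Mx))). split. apply Rabs_pos. intros x.
  pose proof (H1 (cl PI x) (cl_in PI x ltac:(lra))). rewrite (cl_id PI (cl PI x)) in H0 by (apply cl_in; lra).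
  exact H0.
Qed.

Definition rhob (V : R -> R) (x : R) : R :=
  / 2 * RInt (fun t => V (cl PI t)) 0 x - x / (2 * PI) * RInt (fun t => V (cl PI t)) 0 PI.

Lemma Rint_Vb V x : abs_continuous_on V 0 PI -> 0 <= x <= PI -> Rint V 0 x = RInt (fun t => V (cl PI t)) 0 x.
Proof.
  intros hV Hx.
  assert (Ex : forall y, Rmin 0 x < y < Rmax 0 x -> V (cl PI y) = V y).
  { rewrite Rmin_left, Rmax_right by lra. intros y Hy. rewrite cl_id; auto; lra. }
  assert (E1 : ex_RInt (fun t => V (cl PI t)) 0 x) by (apply exRI_all, Vb_cont; auto).
  rewrite Rint_RInt. apply RInt_ext. intros; symmetry; apply Ex; auto.
  eapply ex_RInt_ext; [|exact E1]. exact Ex.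
Qed.

Lemma rho_eq V x : abs_continuous_on V 0 PI -> 0 <= x <= PI -> rho V x = rhob V x.
Proof.
  intros hV Hx. pose proof PI_RGT_0. unfold rho, rhob. rewrite !Rint_Vb; auto. lra.
Qed.

Lemma rhob_der V x : abs_continuous_on V 0 PI ->
  is_derive (rhob V) x (/ 2 * V (cl PI x) - / (2 * PI) * RInt (fun t => V (cl PI t)) 0 PI).
Proof.
  intros hV. pose proof PI_RGT_0. unfold rhob. eapply is_derive_eq. apply isd_sub.
  apply isd_mul. apply is_derive_Reals, derivable_pt_lim_const. apply is_derive_RInt_all, Vb_cont; auto.
  apply isd_mul. auto_derive; auto. apply is_derive_Reals, derivable_pt_lim_const.
  cbv beta. field. lra.
Qed.

Lemma rhob_0 V : rhob V 0 = 0.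
Proof. unfold rhob. rewrite RInt_point. unfold zero; simpl. field. apply PI_neq0. Qed.

Lemma RInt_Vb_bound V M x : abs_continuous_on V 0 PI -> (forall x, Rabs (V (cl PI x)) <= M) -> 0 <= x ->
  Rabs (RInt (fun t => V (cl PI t)) 0 x) <= x * M.
Proof.
  intros hV HM Hx. replace (x * M) with ((x - 0) * M) by ring. apply abs_RInt_le_const; auto.
  apply exRI_all, Vb_cont; auto.
Qed.

Lemma rhob_bound V M x : abs_continuous_on V 0 PI -> (forall x, Rabs (V (cl PI x)) <= M) -> 0 <= x <= PI ->
  Rabs (rhob V x) <= PI * M.
Proof.
  intros hV HM Hx. pose proof PI_RGT_0. unfold rhob.
  pose proof (RInt_Vb_bound V M x hV HM ltac:(lra)). pose proof (RInt_Vb_bound V M PI hV HM ltac:(lra)).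
  assert (0 <= M) by (pose proof (HM 0); pose proof (Rabs_pos (V (cl PI 0))); lra).
  set (A := RInt (fun t : R => V (cl PI t)) 0 x) in *. set (B := RInt (fun t : R => V (cl PI t)) 0 PI) in *.
  eapply Rle_trans. apply Rabs_triang. rewrite Rabs_Ropp, !Rabs_mult.
  rewrite (Rabs_right (/2)) by lra. unfold Rdiv. rewrite Rabs_mult, (Rabs_right x) by lra.
  rewrite (Rabs_right (/ (2 * PI))) by (apply Rle_ge; left; apply Rinv_0_lt_compat; lra).
  assert (/ 2 * Rabs A <= / 2 * (x * M)) by lra.
  assert (x * / (2 * PI) * Rabs B <= x * / (2 * PI) * (PI * M)).
  { apply Rmult_le_compat_l; auto. apply Rmult_le_pos. lra. left; apply Rinv_0_lt_compat; lra. }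
  replace (x * / (2 * PI) * (PI * M)) with (x * M / 2) in H4 by (field; lra).
  assert (x * M <= PI * M) by nra. lra.
Qed.

Lemma rhob_der_bound V M x : abs_continuous_on V 0 PI -> (forall x, Rabs (V (cl PI x)) <= M) ->
  Rabs (/ 2 * V (cl PI x) - / (2 * PI) * RInt (fun t => V (cl PI t)) 0 PI) <= M.
Proof.
  intros hV HM. pose proof PI_RGT_0.
  pose proof (RInt_Vb_bound V M PI hV HM ltac:(lra)). pose proof (HM x).
  set (B := RInt (fun t : R => V (cl PI t)) 0 PI) in *.
  eapply Rle_trans. apply Rabs_triang. rewrite Rabs_Ropp, !Rabs_mult.
  rewrite (Rabs_right (/2)) by lra.
  rewrite (Rabs_right (/ (2 * PI))) by (apply Rle_ge; left; apply Rinv_0_lt_compat; lra).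
  assert (/ (2 * PI) * Rabs B <= / (2 * PI) * (PI * M)).
  { apply Rmult_le_compat_l; auto. left; apply Rinv_0_lt_compat; lra. }
  replace (/ (2 * PI) * (PI * M)) with (M / 2) in H2 by (field; lra). lra.
Qed.



Lemma xi_CD V xi dxi z : is_xi V xi dxi ->
  xi 0 z = (1, 0) /\ dxi 0 z = (0, 0) /\
  (forall x, 0 <= x <= PI -> CD (fun t => xi t z) x (dxi x z)) /\
  (forall x, 0 <= x <= PI -> CD (fun t => dxi t z) x (Cmul (Csub (RtoC (V x)) z) (xi x z))).
Proof.
  intros H. destruct (H z) as [H0 [H1 H2]]. split; [exact H0|]. split; [exact H1|].
  split; intros x Hx; destruct (H2 x Hx) as [A [B [C D]]]; split; apply is_derive_Reals; auto.
Qed.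

Definition yF (xi : R -> Cx -> Cx) (z : Cx) (x : R) := Ffun xi x z.
Definition dyF (dxi : R -> Cx -> Cx) (z : Cx) (x : R) := Csub (dxi x z) (dcc (Re (Csqrt z)) (Im (Csqrt z)) x).
Definition gF (V : R -> R) (xi : R -> Cx -> Cx) (z : Cx) (x : R) := Cscal (V (cl PI x)) (xi x z).

Lemma setup V xi dxi M z : abs_continuous_on V 0 PI -> is_xi V xi dxi -> (forall x, Rabs (V (cl PI x)) <= M) ->
  let sg := Re (Csqrt z) in let ta := Im (Csqrt z) in
  yF xi z 0 = (0, 0) /\ dyF dxi z 0 = (0, 0) /\
  (forall x, 0 <= x <= PI -> CD (yF xi z) x (dyF dxi z x)) /\
  (forall x, 0 <= x <= PI -> CD (dyF dxi z) x (Csub (gF V xi z x) (Cmul (Cmul (sg, ta) (sg, ta)) (yF xi z x)))) /\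
  (forall x, 0 <= x <= PI -> CC (gF V xi z) x) /\
  (forall x, 0 <= x <= PI -> Cmod (gF V xi z x) <= M * (Cmod (yF xi z x) + exp (Rabs ta * x))).
Proof.
  intros hV hxi HM sg ta.
  destruct (xi_CD V xi dxi z hxi) as [X0 [DX0 [XD DXD]]].
  assert (Hs : Cmul (sg, ta) (sg, ta) = z).
  { unfold sg, ta. rewrite <- surjective_pairing. apply Csqrt_sq. }
  assert (Yc : forall x, yF xi z x = Csub (xi x z) (cc sg ta x)) by reflexivity.
  split; [|split; [|split; [|split; [|split]]]].
  - rewrite Yc, X0. unfold cc, Csub, Re, Im; cbn [fst snd].
    rewrite !Rmult_0_l, cos_0, sin_0, cosh_0. unfold sinh. rewrite Ropp_0, exp_0. f_equal; field.
  - unfold dyF. rewrite DX0. fold sg ta. unfold dcc, Csub, Re, Im; cbn [fst snd].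
    rewrite !Rmult_0_l, cos_0, sin_0, cosh_0. unfold sinh. rewrite Ropp_0, exp_0. f_equal; field.
  - intros x Hx. eapply CD_ext. intros t; symmetry; apply Yc. apply CD_sub. apply XD; auto. apply CD_cc.
  - intros x Hx. unfold dyF. fold sg ta. eapply CD_eq. apply CD_sub. apply DXD; auto. apply CD_dcc.
    rewrite Yc, Hs. unfold gF. rewrite cl_id by auto.
    generalize (xi x z) (cc sg ta x); intros [a b] [c d]. destruct z as [z1 z2].
    unfold Csub, Cmul, Cscal, RtoC, Re, Im; cbn [fst snd]. f_equal; ring.
  - intros x Hx. unfold gF. apply CC_scal. apply Vb_cont; auto. eapply CD_CC. apply XD; auto.
  - intros x Hx. unfold gF. rewrite Cmod_scal.
    assert (E : xi x z = Cadd (yF xi z x) (cc sg ta x)).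
    { rewrite Yc. destruct (xi x z), (cc sg ta x). unfold Cadd, Csub, Re, Im; cbn [fst snd]; f_equal; ring. }
    pose proof (Cmod_add (yF xi z x) (cc sg ta x)). pose proof (cc_bound sg ta x ltac:(lra)).
    rewrite E. pose proof (Rabs_pos (V (cl PI x))). pose proof (HM x).
    pose proof (Cmod_ge0 (Cadd (yF xi z x) (cc sg ta x))).
    apply Rle_trans with (M * Cmod (Cadd (yF xi z x) (cc sg ta x))).
    apply Rmult_le_compat_r; auto. apply Rmult_le_compat_l; lra.
Qed.

Lemma Fbounds V xi dxi M z : abs_continuous_on V 0 PI -> is_xi V xi dxi -> 0 <= M ->
  (forall x, Rabs (V (cl PI x)) <= M) ->
  forall x, 0 <= x <= PI ->
    Cmod (yF xi z x) <= Kc M * exp (Rabs (Im (Csqrt z)) * x) /\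
    Cmod (Csqrt z) * Cmod (yF xi z x) <= Kc M * exp (Rabs (Im (Csqrt z)) * x) /\
    Cmod (dyF dxi z x) <= Kc M * exp (Rabs (Im (Csqrt z)) * x).
Proof.
  intros hV hxi HM0 HM. destruct (setup V xi dxi M z hV hxi HM) as [A [B [C [D [E F]]]]].
  intros x Hx. rewrite (surjective_pairing (Csqrt z)).
  apply (core _ _ M (yF xi z) (dyF dxi z) (gF V xi z)); auto.
Qed.



Lemma PI_gt2 : 2 < PI.
Proof. pose proof PI2_1; lra. Qed.

Lemma arith1 t A B : 0 <= t -> 0 <= A -> 0 <= B ->
  A + B * t <= (2 * PI * (A + B) + 1) * (1 + (1 + t ^ 2) / (1 + PI * t)).
Proof.
  intros Ht HA HB. pose proof PI_gt2.
  assert (Hd : 0 < 1 + PI * t) by nra.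
  set (Q := (1 + t ^ 2) / (1 + PI * t)).
  assert (HQ : Q * (1 + PI * t) = 1 + t ^ 2) by (unfold Q; field; lra).
  assert (Q0 : 0 <= Q) by (unfold Q; apply Rdiv_le_0_compat; nra).
  assert (K1 : 1 + t <= 2 * PI * (1 + Q)).
  { apply Rmult_le_reg_r with (1 + PI * t); auto.
    replace (2 * PI * (1 + Q) * (1 + PI * t)) with (2 * PI * (1 + PI * t) + 2 * PI * (Q * (1 + PI * t))) by ring.
    rewrite HQ. nra. }
  assert (A + B * t <= (A + B) * (1 + t)) by nra.
  assert ((A + B) * (1 + t) <= (A + B) * (2 * PI * (1 + Q))) by (apply Rmult_le_compat_l; lra).
  nra.
Qed.

Lemma arith2 t A B : 0 <= t -> 0 <= A -> 0 <= B ->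
  A + B * t <= (2 * PI * (A + B) + 1) * (1 + t ^ 2 / (1 + PI * t)).
Proof.
  intros Ht HA HB. pose proof PI_gt2.
  assert (Hd : 0 < 1 + PI * t) by nra.
  set (Q := t ^ 2 / (1 + PI * t)).
  assert (HQ : Q * (1 + PI * t) = t ^ 2) by (unfold Q; field; lra).
  assert (Q0 : 0 <= Q) by (unfold Q; apply Rdiv_le_0_compat; nra).
  assert (K1 : 1 + t <= 2 * PI * (1 + Q)).
  { apply Rmult_le_reg_r with (1 + PI * t); auto.
    replace (2 * PI * (1 + Q) * (1 + PI * t)) with (2 * PI * (1 + PI * t) + 2 * PI * (Q * (1 + PI * t))) by ring.
    rewrite HQ. nra. }
  assert (A + B * t <= (A + B) * (1 + t)) by nra.
  assert ((A + B) * (1 + t) <= (A + B) * (2 * PI * (1 + Q))) by (apply Rmult_le_compat_l; lra).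
  nra.
Qed.

Lemma sin_nPI n : sin (INR n * PI) = 0.
Proof.
  induction n. simpl. rewrite Rmult_0_l; apply sin_0.
  rewrite S_INR, Rmult_plus_distr_r, Rmult_1_l, sin_plus, IHn, sin_PI. ring.
Qed.

Lemma Cmod_scal_le r a R0 B : Rabs r <= R0 -> Cmod a <= B -> Cmod (Cscal r a) <= R0 * B.
Proof.
  intros H1 H2. rewrite Cmod_scal. apply Rmult_le_compat; auto. apply Rabs_pos. apply Cmod_ge0.
Qed.

Lemma abs_div1 u nn : 0 < nn -> -1 <= u <= 1 -> Rabs (u / nn) <= / nn.
Proof.
  intros Hn Hu. unfold Rdiv. rewrite Rabs_mult, Rabs_inv, (Rabs_right nn) by lra.
  assert (Rabs u <= 1) by (apply Rabs_le; lra).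
  pose proof (Rinv_0_lt_compat nn Hn). nra.
Qed.

Lemma Cint_CI' f g a b : a <= b -> (forall x, a <= x <= b -> f x = g x) ->
  (forall x, a <= x <= b -> CC g x) -> Cint f a b = CI g a b.
Proof.
  intros Hab E Hg. unfold Cint, CI, Re, Im.
  assert (E1 : ex_RInt (fun t => fst (g t)) a b) by (apply exRI; auto; intros; apply Hg; auto).
  assert (E2 : ex_RInt (fun t => snd (g t)) a b) by (apply exRI; auto; intros; apply Hg; auto).
  assert (Q : forall x, Rmin a b < x < Rmax a b -> f x = g x).
  { rewrite Rmin_left, Rmax_right by lra. intros; apply E; lra. }
  rewrite (Rint_RInt (fun x => fst (f x))), (Rint_RInt (fun x => snd (f x))).
  - rewrite (RInt_ext (fun x => fst (f x)) (fun t => fst (g t)) a b),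
      (RInt_ext (fun x => snd (f x)) (fun t => snd (g t)) a b); [reflexivity| |];
    intros; rewrite Q; auto.
  - eapply ex_RInt_ext; [|exact E2]. intros; rewrite Q; auto.
  - eapply ex_RInt_ext; [|exact E1]. intros; rewrite Q; auto.
Qed.

Lemma Cscal0 r : Cscal r (0, 0) = (0, 0).
Proof. unfold Cscal, Re, Im; cbn [fst snd]; f_equal; ring. Qed.

Lemma exp_le_PI ta x : 0 <= x <= PI -> exp (Rabs ta * x) <= exp (PI * Rabs ta).
Proof. intros Hx. apply exp_mono. pose proof (Rabs_pos ta). nra. Qed.



Lemma isd_sin_div nn x : 0 < nn -> is_derive (fun t => sin (nn * t) / nn) x (cos (nn * x)).
Proof. intros Hn. eapply is_derive_eq. auto_derive; auto. cbv beta. field. lra. Qed.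
Lemma isd_cos_div2 nn x : 0 < nn -> is_derive (fun t => cos (nn * t) / nn ^ 2) x (- (sin (nn * x) / nn)).
Proof. intros Hn. eapply is_derive_eq. auto_derive; auto. cbv beta. field. lra. Qed.
Lemma cont_sin_lin nn t : continuity_pt (fun x => sin (nn * x)) t.
Proof. apply isd_cont with (l := nn * cos (nn * t)). auto_derive; auto. ring. Qed.
Lemma cont_cos_lin nn t : continuity_pt (fun x => cos (nn * x)) t.
Proof. apply isd_cont with (l := - nn * sin (nn * t)). auto_derive; auto. ring. Qed.

Lemma bound1 V xi dxi M : abs_continuous_on V 0 PI -> is_xi V xi dxi -> 0 <= M ->
  (forall x, Rabs (V (cl PI x)) <= M) ->
  forall z n, (1 <= n)%nat ->
  Cmod (Cint (fun x => Cscal (cos (INR n * x)) (Ffun xi x z)) 0 PI) <=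
  exp (PI * Rabs (Im (Csqrt z))) / (INR n ^ 2) *
    ((Kc M + PI * M * (Kc M + 1)) + PI * Kc M * Cmod (Csqrt z)).
Proof.
  intros hV hxi HM0 HM z n Hn1.
  pose proof PI_RGT_0 as HPI.
  assert (Hn : 0 < INR n) by (apply lt_0_INR; lia).
  set (nn := INR n) in *.
  set (K := Kc M). assert (K0 : 0 <= K) by (apply Kc_ge0; auto).
  set (sg := Re (Csqrt z)). set (ta := Im (Csqrt z)).
  set (e := exp (PI * Rabs ta)).
  set (t := Cmod (Csqrt z)). assert (t0 : 0 <= t) by apply Cmod_ge0.
  assert (St : Cmod (sg, ta) = t) by (unfold t, sg, ta; rewrite <- surjective_pairing; auto).
  destruct (setup V xi dxi M z hV hxi HM) as [Y0 [DY0 [YD [DYD [GC GB]]]]]. fold sg ta in DYD, GB.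
  pose proof (Fbounds V xi dxi M z hV hxi HM0 HM) as FB. fold K ta t in FB.
  set (y := yF xi z) in *. set (dy := dyF dxi z) in *. set (g := gF V xi z) in *.
  set (zz := Cmul (sg, ta) (sg, ta)) in *.
  set (h := fun x => Cadd (Cscal (sin (nn * x) / nn) (y x)) (Cscal (cos (nn * x) / nn ^ 2) (dy x))).
  set (rest := fun x => Cscal (cos (nn * x) / nn ^ 2) (Csub (g x) (Cmul zz (y x)))).
  set (h' := fun x => Cadd (Cscal (cos (nn * x)) (y x)) (rest x)).
  assert (CY : forall x, 0 <= x <= PI -> CC y x) by (intros; eapply CD_CC; apply YD; auto).
  assert (CDY : forall x, 0 <= x <= PI -> CC dy x) by (intros; eapply CD_CC; apply DYD; auto).
  assert (Crest : forall x, 0 <= x <= PI -> CC rest x).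
  { intros x Hx. unfold rest. apply CC_scal.
    apply continuity_pt_mult. apply cont_cos_lin. apply continuity_pt_const; intros ? ?; auto.
    apply CC_sub. apply GC; auto. apply CC_mul. apply CC_const. apply CY; auto. }
  assert (Ch' : forall x, 0 <= x <= PI -> CC h' x).
  { intros x Hx. unfold h'. apply CC_add; auto. apply CC_scal. apply cont_cos_lin. apply CY; auto. }
  assert (Dh : forall x, 0 <= x <= PI -> CD h x (h' x)).
  { intros x Hx. unfold h. eapply CD_eq. apply CD_add.
    apply CD_scal. apply isd_sin_div; auto. apply YD; auto.
    apply CD_scal. apply isd_cos_div2; auto. apply DYD; auto.
    unfold h', rest. fold zz. generalize (y x) (dy x) (g x) zz; intros [a1 a2] [b1 b2] [c1 c2] [d1 d2].
    unfold Cadd, Cscal, Csub, Cmul, Re, Im; cbn [fst snd]. f_equal; field; lra. }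
  assert (E1 : Cint (fun x => Cscal (cos (nn * x)) (Ffun xi x z)) 0 PI
             = CI (fun x => Csub (h' x) (rest x)) 0 PI).
  { apply Cint_CI'. lra.
    - intros x Hx. unfold h'. change (Ffun xi x z) with (y x).
      generalize (y x) (rest x); intros [a1 a2] [b1 b2].
      unfold Cadd, Cscal, Csub, Re, Im; cbn [fst snd]. f_equal; ring.
    - intros; apply CC_sub; auto. }
  rewrite E1, CI_sub by (auto; lra).
  rewrite (CI_FTC h h') by (auto; lra).
  assert (H0 : h 0 = (0, 0)).
  { unfold h. rewrite Y0, DY0, !Cscal0. unfold Cadd, Re, Im; cbn [fst snd]; f_equal; ring. }
  rewrite H0.
  assert (Bh : Cmod (h PI) <= / nn ^ 2 * (K * e)).
  { unfold h. eapply Rle_trans. apply Cmod_add.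
    rewrite Cmod_scal. unfold nn. rewrite sin_nPI. replace (Rabs (0 / INR n)) with 0
      by (unfold Rdiv; rewrite Rmult_0_l, Rabs_R0; auto). rewrite Rmult_0_l, Rplus_0_l. fold nn.
    apply Cmod_scal_le. apply abs_div1. nra. apply COS_bound.
    destruct (FB PI ltac:(lra)) as [_ [_ F3]]. eapply Rle_trans. exact F3.
    apply Rmult_le_compat_l; auto. apply exp_le_PI; lra. }
  assert (Brest : Cmod (CI rest 0 PI) <= (PI - 0) * (/ nn ^ 2 * (M * (K * e + e) + t * (K * e)))).
  { apply CI_bound. lra. auto. intros x Hx. unfold rest.
    apply Cmod_scal_le. apply abs_div1. nra. apply COS_bound.
    destruct (FB x Hx) as [F1 [F2 F3]].
    pose proof (exp_le_PI ta x Hx) as EL. fold e in EL.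
    eapply Rle_trans. apply Cmod_sub. apply Rplus_le_compat.
    - eapply Rle_trans. apply GB; auto. apply Rmult_le_compat_l; auto.
      apply Rplus_le_compat; auto. eapply Rle_trans. exact F1. apply Rmult_le_compat_l; auto.
    - unfold zz. rewrite !Cmod_mul, St.
      replace (t * t * Cmod (y x)) with (t * (t * Cmod (y x))) by ring.
      apply Rmult_le_compat_l; auto. eapply Rle_trans. exact F2. apply Rmult_le_compat_l; auto. }
  eapply Rle_trans. apply Cmod_sub. eapply Rle_trans. apply Rplus_le_compat_r. apply Cmod_sub.
  rewrite Cmod_zero.
  assert (en : 0 < / nn ^ 2) by (apply Rinv_0_lt_compat; nra).
  assert (e0 : 0 < e) by apply exp_pos.
  replace (e / nn ^ 2 * (K + PI * M * (K + 1) + PI * K * t))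
    with (/ nn ^ 2 * (K * e) + (PI - 0) * (/ nn ^ 2 * (M * (K * e + e) + t * (K * e)))) by (field; lra).
  lra.
Qed.



Definition kf (nn x : R) := - cos (nn * x) / nn.
Definition drho (V : R -> R) (x : R) := / 2 * V (cl PI x) - / (2 * PI) * RInt (fun t => V (cl PI t)) 0 PI.

Lemma isd_kf nn x : 0 < nn -> is_derive (kf nn) x (sin (nn * x)).
Proof. intros Hn. unfold kf. eapply is_derive_eq. auto_derive; auto. cbv beta. field. lra. Qed.
Lemma kf_bound nn x : 0 < nn -> Rabs (kf nn x) <= / nn.
Proof. intros Hn. unfold kf. apply abs_div1; auto. pose proof (COS_bound (nn * x)); lra. Qed.
Lemma cont_kf nn x : 0 < nn -> continuity_pt (kf nn) x.
Proof. intros Hn. eapply isd_cont. apply isd_kf; auto. Qed.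

Lemma isd_r V nn x : abs_continuous_on V 0 PI -> 0 < nn ->
  is_derive (fun t => rhob V t * kf nn t) x (drho V x * kf nn x + rhob V x * sin (nn * x)).
Proof. intros hV Hn. apply isd_mul. apply rhob_der; auto. apply isd_kf; auto. Qed.

Lemma cont_r V nn x : abs_continuous_on V 0 PI -> 0 < nn -> continuity_pt (fun t => rhob V t * kf nn t) x.
Proof. intros hV Hn. eapply isd_cont. apply isd_r; auto. Qed.
Lemma cont_drho V x : abs_continuous_on V 0 PI -> continuity_pt (drho V) x.
Proof.
  intros hV. unfold drho. apply continuity_pt_minus; apply continuity_pt_mult.
  apply continuity_pt_const; intros ? ?; auto. apply Vb_cont; auto.
  apply continuity_pt_const; intros ? ?; auto. apply continuity_pt_const; intros ? ?; auto.
Qed.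
Lemma cont_rho V x : abs_continuous_on V 0 PI -> continuity_pt (rhob V) x.
Proof. intros hV. eapply isd_cont. apply rhob_der; auto. Qed.

Lemma r_bound V M nn x : abs_continuous_on V 0 PI -> (forall x, Rabs (V (cl PI x)) <= M) -> 0 < nn ->
  0 <= x <= PI -> Rabs (rhob V x * kf nn x) <= PI * M * / nn.
Proof.
  intros hV HM Hn Hx. rewrite Rabs_mult. apply Rmult_le_compat; try apply Rabs_pos.
  apply rhob_bound; auto. apply kf_bound; auto.
Qed.
Lemma drk_bound V M nn x : abs_continuous_on V 0 PI -> (forall x, Rabs (V (cl PI x)) <= M) -> 0 < nn ->
  Rabs (drho V x * kf nn x) <= M * / nn.
Proof.
  intros hV HM Hn. rewrite Rabs_mult. apply Rmult_le_compat; try apply Rabs_pos.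
  apply rhob_der_bound; auto. apply kf_bound; auto.
Qed.

Lemma bound2 V M a : abs_continuous_on V 0 PI -> 0 <= M -> (forall x, Rabs (V (cl PI x)) <= M) ->
  0 < a <= PI -> forall z n, (1 <= n)%nat ->
  Cmod (Cint (fun x => Cscal (rho V x * sin (INR n * x)) (Ccos (Cscal x (Csqrt z)))) 0 a) <=
  exp (PI * Rabs (Im (Csqrt z))) / INR n * (2 * PI * M + PI * PI * M * Cmod (Csqrt z)).
Proof.
  intros hV HM0 HM Ha z n Hn1.
  pose proof PI_RGT_0 as HPI.
  assert (Hn : 0 < INR n) by (apply lt_0_INR; lia).
  set (nn := INR n) in *.
  set (sg := Re (Csqrt z)). set (ta := Im (Csqrt z)).
  set (e := exp (PI * Rabs ta)).
  set (t := Cmod (Csqrt z)). assert (t0 : 0 <= t) by apply Cmod_ge0.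
  assert (St : Cmod (sg, ta) = t) by (unfold t, sg, ta; rewrite <- surjective_pairing; auto).
  set (r := fun x => rhob V x * kf nn x).
  set (c := cc sg ta). set (dc := dcc sg ta).
  set (h := fun x => Cscal (r x) (c x)).
  set (h' := fun x => Cadd (Cscal (drho V x * kf nn x + rhob V x * sin (nn * x)) (c x)) (Cscal (r x) (dc x))).
  set (rest := fun x => Cadd (Cscal (drho V x * kf nn x) (c x)) (Cscal (r x) (dc x))).
  assert (Cc : forall x, CC c x) by (intros; eapply CD_CC; apply CD_cc).
  assert (Cdc : forall x, CC dc x) by (intros; eapply CD_CC; apply CD_dcc).
  assert (Crest : forall x, CC rest x).
  { intros x. unfold rest. apply CC_add; apply CC_scal; auto.
    apply continuity_pt_mult. apply cont_drho; auto. apply cont_kf; auto. apply cont_r; auto. }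
  assert (Ch' : forall x, CC h' x).
  { intros x. unfold h'. apply CC_add; apply CC_scal; auto.
    apply continuity_pt_plus; apply continuity_pt_mult. apply cont_drho; auto. apply cont_kf; auto.
    apply cont_rho; auto. apply cont_sin_lin. apply cont_r; auto. }
  assert (Dh : forall x, CD h x (h' x)).
  { intros x. unfold h, h'. apply CD_scal. apply isd_r; auto. apply CD_cc. }
  assert (E1 : Cint (fun x => Cscal (rho V x * sin (nn * x)) (Ccos (Cscal x (Csqrt z)))) 0 a
             = CI (fun x => Csub (h' x) (rest x)) 0 a).
  { apply Cint_CI'. lra.
    - intros x Hx. unfold h', rest. rewrite rho_eq by (auto; lra). rewrite cc_eq. fold sg ta c.
      generalize (c x) (dc x); intros [a1 a2] [b1 b2].
      unfold Cadd, Cscal, Csub, Re, Im; cbn [fst snd]. f_equal; ring.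
    - intros; apply CC_sub; auto. }
  rewrite E1, CI_sub by (auto; lra).
  rewrite (CI_FTC h h') by (auto; lra).
  assert (H0 : h 0 = (0, 0)).
  { unfold h, r. rewrite rhob_0, Rmult_0_l. unfold Cscal, Re, Im; cbn [fst snd]; f_equal; ring. }
  rewrite H0.
  assert (Bh : Cmod (h a) <= PI * M * / nn * e).
  { unfold h. apply Cmod_scal_le. apply r_bound; auto; lra.
    eapply Rle_trans. apply cc_bound; lra. apply exp_le_PI; lra. }
  assert (Brest : Cmod (CI rest 0 a) <= (a - 0) * (M * / nn * e + PI * M * / nn * (t * e))).
  { apply CI_bound. lra. auto. intros x Hx. unfold rest.
    pose proof (exp_le_PI ta x ltac:(lra)) as EL. fold e in EL.
    eapply Rle_trans. apply Cmod_add. apply Rplus_le_compat.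
    - apply Cmod_scal_le. apply drk_bound; auto. eapply Rle_trans. apply cc_bound; lra. auto.
    - apply Cmod_scal_le. apply r_bound; auto; lra. eapply Rle_trans. apply dcc_bound; lra.
      rewrite St. apply Rmult_le_compat_l; auto. }
  eapply Rle_trans. apply Cmod_sub. eapply Rle_trans. apply Rplus_le_compat_r. apply Cmod_sub.
  rewrite Cmod_zero.
  assert (en : 0 < / nn) by (apply Rinv_0_lt_compat; nra).
  assert (e0 : 0 < e) by apply exp_pos.
  assert (Q0 : 0 <= M * / nn * e + PI * M * / nn * (t * e)).
  { assert (0 <= M * / nn * e) by (apply Rmult_le_pos; [apply Rmult_le_pos|]; lra).
    assert (0 <= PI * M * / nn * (t * e)) by
      (apply Rmult_le_pos; [apply Rmult_le_pos; [apply Rmult_le_pos|]|apply Rmult_le_pos]; lra). lra. }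
  assert (QA : (a - 0) * (M * / nn * e + PI * M * / nn * (t * e)) <= PI * (M * / nn * e + PI * M * / nn * (t * e))).
  { apply Rmult_le_compat_r; lra. }
  replace (e / nn * (2 * PI * M + PI * PI * M * t))
    with (PI * M * / nn * e + PI * (M * / nn * e + PI * M * / nn * (t * e))) by (field; lra).
  lra.
Qed.

Lemma bound3 V xi dxi M a : abs_continuous_on V 0 PI -> is_xi V xi dxi -> 0 <= M ->
  (forall x, Rabs (V (cl PI x)) <= M) ->
  0 < a <= PI -> forall z n, (1 <= n)%nat ->
  Cmod (Cint (fun x => Cscal (rho V x * sin (INR n * x)) (Ffun xi x z)) 0 a) <=
  exp (PI * Rabs (Im (Csqrt z))) / INR n * (PI * M * Kc M + PI * (M * Kc M + PI * M * Kc M)).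
Proof.
  intros hV hxi HM0 HM Ha z n Hn1.
  pose proof PI_RGT_0 as HPI.
  assert (Hn : 0 < INR n) by (apply lt_0_INR; lia).
  set (nn := INR n) in *.
  set (K := Kc M). assert (K0 : 0 <= K) by (apply Kc_ge0; auto).
  set (sg := Re (Csqrt z)). set (ta := Im (Csqrt z)).
  set (e := exp (PI * Rabs ta)).
  destruct (setup V xi dxi M z hV hxi HM) as [Y0 [DY0 [YD [DYD [GC GB]]]]]. fold sg ta in DYD, GB.
  pose proof (Fbounds V xi dxi M z hV hxi HM0 HM) as FB. fold K ta in FB.
  set (y := yF xi z) in *. set (dy := dyF dxi z) in *.
  set (r := fun x => rhob V x * kf nn x).
  set (h := fun x => Cscal (r x) (y x)).
  set (h' := fun x => Cadd (Cscal (drho V x * kf nn x + rhob V x * sin (nn * x)) (y x)) (Cscal (r x) (dy x))).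
  set (rest := fun x => Cadd (Cscal (drho V x * kf nn x) (y x)) (Cscal (r x) (dy x))).
  assert (CY : forall x, 0 <= x <= PI -> CC y x) by (intros; eapply CD_CC; apply YD; auto).
  assert (CDY : forall x, 0 <= x <= PI -> CC dy x) by (intros; eapply CD_CC; apply DYD; auto).
  assert (Crest : forall x, 0 <= x <= PI -> CC rest x).
  { intros x Hx. unfold rest. apply CC_add; apply CC_scal; auto.
    apply continuity_pt_mult. apply cont_drho; auto. apply cont_kf; auto. apply cont_r; auto. }
  assert (Ch' : forall x, 0 <= x <= PI -> CC h' x).
  { intros x Hx. unfold h'. apply CC_add; apply CC_scal; auto.
    apply continuity_pt_plus; apply continuity_pt_mult. apply cont_drho; auto. apply cont_kf; auto.
    apply cont_rho; auto. apply cont_sin_lin. apply cont_r; auto. }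
  assert (Dh : forall x, 0 <= x <= PI -> CD h x (h' x)).
  { intros x Hx. unfold h, h'. apply CD_scal. apply isd_r; auto. apply YD; auto. }
  assert (E1 : Cint (fun x => Cscal (rho V x * sin (nn * x)) (Ffun xi x z)) 0 a
             = CI (fun x => Csub (h' x) (rest x)) 0 a).
  { apply Cint_CI'. lra.
    - intros x Hx. unfold h', rest. rewrite rho_eq by (auto; lra). change (Ffun xi x z) with (y x).
      generalize (y x) (dy x); intros [a1 a2] [b1 b2].
      unfold Cadd, Cscal, Csub, Re, Im; cbn [fst snd]. f_equal; ring.
    - intros; apply CC_sub; [apply Ch'|apply Crest]; lra. }
  rewrite E1. rewrite CI_sub; [| lra | intros; apply Ch'; lra | intros; apply Crest; lra].
  rewrite (CI_FTC h h'); [| lra | intros; apply Dh; lra | intros; apply Ch'; lra].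
  assert (H0 : h 0 = (0, 0)).
  { unfold h, r. rewrite rhob_0, Rmult_0_l. unfold Cscal, Re, Im; cbn [fst snd]; f_equal; ring. }
  rewrite H0.
  assert (Bh : Cmod (h a) <= PI * M * / nn * (K * e)).
  { unfold h. apply Cmod_scal_le. apply r_bound; auto; lra.
    destruct (FB a ltac:(lra)) as [F1 _]. eapply Rle_trans. exact F1.
    apply Rmult_le_compat_l; auto. apply exp_le_PI; lra. }
  assert (Brest : Cmod (CI rest 0 a) <= (a - 0) * (M * / nn * (K * e) + PI * M * / nn * (K * e))).
  { apply CI_bound. lra. intros; apply Crest; lra. intros x Hx. unfold rest.
    pose proof (exp_le_PI ta x ltac:(lra)) as EL. fold e in EL.
    destruct (FB x ltac:(lra)) as [F1 [_ F3]].
    eapply Rle_trans. apply Cmod_add. apply Rplus_le_compat.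
    - apply Cmod_scal_le. apply drk_bound; auto. eapply Rle_trans. exact F1. apply Rmult_le_compat_l; auto.
    - apply Cmod_scal_le. apply r_bound; auto; lra. eapply Rle_trans. exact F3. apply Rmult_le_compat_l; auto. }
  eapply Rle_trans. apply Cmod_sub. eapply Rle_trans. apply Rplus_le_compat_r. apply Cmod_sub.
  rewrite Cmod_zero.
  assert (en : 0 < / nn) by (apply Rinv_0_lt_compat; nra).
  assert (e0 : 0 < e) by apply exp_pos.
  assert (Q0 : 0 <= M * / nn * (K * e) + PI * M * / nn * (K * e)).
  { assert (0 <= M * / nn * (K * e)) by (apply Rmult_le_pos; [apply Rmult_le_pos|apply Rmult_le_pos]; lra).
    assert (0 <= PI * M * / nn * (K * e)) by
      (apply Rmult_le_pos; [apply Rmult_le_pos; [apply Rmult_le_pos|]|apply Rmult_le_pos]; lra). lra. }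
  assert (QA : (a - 0) * (M * / nn * (K * e) + PI * M * / nn * (K * e)) <= PI * (M * / nn * (K * e) + PI * M * / nn * (K * e))).
  { apply Rmult_le_compat_r; lra. }
  replace (e / nn * (PI * M * K + PI * (M * K + PI * M * K)))
    with (PI * M * / nn * (K * e) + PI * (M * / nn * (K * e) + PI * M * / nn * (K * e))) by (field; lra).
  lra.
Qed.



Theorem lemmaA4 (V : R -> R) (xi dxi : R -> Cx -> Cx)
  (hV : abs_continuous_on V 0 PI) (hxi : is_xi V xi dxi) :
  (exists C1, 0 < C1 /\
     forall (z : Cx) (n : nat), (1 <= n)%nat ->
       Cmod (Cint (fun x => Cscal (cos (INR n * x)) (Ffun xi x z)) 0 PI)
       <= C1 * exp (PI * Rabs (Im (Csqrt z))) / (INR n ^ 2)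
          * (1 + (1 + Cmod z) / (1 + PI * sqrt (Cmod z)))) /\
  (forall a, 0 < a <= PI ->
     exists C2 C3, 0 < C2 /\ 0 < C3 /\
     forall (z : Cx) (n : nat), (1 <= n)%nat ->
       Cmod (Cint (fun x => Cscal (rho V x * sin (INR n * x))
                                  (Ccos (Cscal x (Csqrt z)))) 0 a)
       <= C2 * exp (PI * Rabs (Im (Csqrt z))) / INR n
          * (1 + Cmod z / (1 + PI * sqrt (Cmod z))) /\
       Cmod (Cint (fun x => Cscal (rho V x * sin (INR n * x)) (Ffun xi x z)) 0 a)
       <= C3 * exp (PI * Rabs (Im (Csqrt z))) / INR n
          * (1 + 1 / (1 + PI * sqrt (Cmod z)))).
Proof.
  destruct (Vb_bound V hV) as [M [HM0 HM]].
  pose proof PI_RGT_0 as HPI.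
  pose proof (Kc_ge0 M HM0) as K0.
  assert (Tz : forall z, sqrt (Cmod z) = Cmod (Csqrt z) /\ Cmod z = Cmod (Csqrt z) ^ 2).
  { intros z. rewrite Cmod_Csqrt. split; auto. rewrite pow2_sqrt; auto. apply Cmod_ge0. }
  split.
  - set (A := Kc M + PI * M * (Kc M + 1)). set (B := PI * Kc M).
    assert (A0 : 0 <= A) by (unfold A; assert (0 <= PI * M * (Kc M + 1)) by
      (apply Rmult_le_pos; [apply Rmult_le_pos|]; lra); lra).
    assert (B0 : 0 <= B) by (unfold B; apply Rmult_le_pos; lra).
    exists (2 * PI * (A + B) + 1). split. nra.
    intros z n Hn. eapply Rle_trans. apply (bound1 V xi dxi M); auto.
    destruct (Tz z) as [T1 T2]. rewrite T1, T2.
    assert (Hnn : 0 < INR n) by (apply lt_0_INR; lia).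
    pose proof (exp_pos (PI * Rabs (Im (Csqrt z)))).
    set (e := exp (PI * Rabs (Im (Csqrt z)))) in *.
    replace ((2 * PI * (A + B) + 1) * e / INR n ^ 2 *
             (1 + (1 + Cmod (Csqrt z) ^ 2) / (1 + PI * Cmod (Csqrt z))))
      with (e / INR n ^ 2 * ((2 * PI * (A + B) + 1) * (1 + (1 + Cmod (Csqrt z) ^ 2) / (1 + PI * Cmod (Csqrt z)))))
      by (unfold Rdiv; ring).
    apply Rmult_le_compat_l. apply Rdiv_le_0_compat; nra.
    apply arith1; auto. apply Cmod_ge0.
  - intros a Ha.
    set (A2 := 2 * PI * M). set (B2 := PI * PI * M).
    set (A3 := PI * M * Kc M + PI * (M * Kc M + PI * M * Kc M)).
    assert (A20 : 0 <= A2) by (unfold A2; nra).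
    assert (B20 : 0 <= B2) by (unfold B2; apply Rmult_le_pos; [apply Rmult_le_pos|]; lra).
    assert (A30 : 0 <= A3).
    { unfold A3. assert (0 <= M * Kc M) by nra. assert (0 <= PI * M * Kc M) by (apply Rmult_le_pos; [apply Rmult_le_pos|]; lra).
      assert (0 <= PI * (M * Kc M + PI * M * Kc M)) by (apply Rmult_le_pos; lra). lra. }
    exists (2 * PI * (A2 + B2) + 1), (A3 + 1). split. nra. split. lra.
    intros z n Hn.
    destruct (Tz z) as [T1 T2]. rewrite T1, T2.
    assert (Hnn : 0 < INR n) by (apply lt_0_INR; lia).
    pose proof (exp_pos (PI * Rabs (Im (Csqrt z)))).
    pose proof (Cmod_ge0 (Csqrt z)).
    split.
    + eapply Rle_trans. apply (bound2 V M a); auto. fold A2 B2.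
      set (e := exp (PI * Rabs (Im (Csqrt z)))) in *.
      replace ((2 * PI * (A2 + B2) + 1) * e / INR n *
               (1 + Cmod (Csqrt z) ^ 2 / (1 + PI * Cmod (Csqrt z))))
        with (e / INR n * ((2 * PI * (A2 + B2) + 1) * (1 + Cmod (Csqrt z) ^ 2 / (1 + PI * Cmod (Csqrt z)))))
        by (unfold Rdiv; ring).
      apply Rmult_le_compat_l. apply Rdiv_le_0_compat; nra.
      apply arith2; auto.
    + eapply Rle_trans. apply (bound3 V xi dxi M a); auto. fold A3.
      set (e := exp (PI * Rabs (Im (Csqrt z)))) in *.
      replace ((A3 + 1) * e / INR n * (1 + 1 / (1 + PI * Cmod (Csqrt z))))
        with (e / INR n * ((A3 + 1) * (1 + 1 / (1 + PI * Cmod (Csqrt z))))) by (unfold Rdiv; ring).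
      apply Rmult_le_compat_l. apply Rdiv_le_0_compat; nra.
      assert (0 <= 1 / (1 + PI * Cmod (Csqrt z))) by (apply Rdiv_le_0_compat; nra).
      nra.
Qed.
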